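(* Let $b(z)$ be a holomorphic function, $\bar b(\bar z)=\overline{b(z)}$, let $r(y)$ and $k(y)$ be arbitrary smooth real-valued functions of one real variable, and put $y=i(\bar q-q)/2$. Let $G(z,\bar z)$ be a real function with $G_{z\bar z}=\dfrac{b(z)+\bar b(\bar z)}{(z+\bar z)^2}$ and let $K(y,z,\bar z)$ be an antiderivative with respect to $y$ of $\ln\!\left[\dfrac{\bar z+2ik(y)}{z-2ik(y)}\right]$. Then each of the functions $$\psi_1=[q+b(z)]\ln[q+b(z)]+[\bar q+\bar b(\bar z)]\ln[\bar q+\bar b(\bar z)]-(q+\bar q)[\ln(z+\bar z)+1]+G(z,\bar z)+r(y),$$ $$\psi_2=\psi_1+2iy\ln(\bar z/z),\qquad \psi_3=\psi_1+2iK(y,z,\bar z)$$ is a solution of $$\psi_{q\bar q}\psi_{z\bar z}-\psi_{q\bar z}\psi_{\bar q z}=e^{\psi_q+\psi_{\bar q}}\bigl(\psi_{q\bar q}^2-\psi_{qq}\psi_{\bar q\bar q}\bigr).$$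
   Context: All functions are considered on an open set where the logarithms are defined, with branches chosen so that $\ln(\bar q+\bar b)=\overline{\ln(q+b)}$, and with $z+\bar z>0$. Subscripts denote partial (Wirtinger) derivatives with respect to the complex variables $q,\bar q,z,\bar z$; bars denote complex conjugation. *)

(* Defs.v *)
From Stdlib Require Import Reals Lra ClassicalEpsilon.
Open Scope R_scope.

Definition Cx : Type := (R * R)%type.
Definition Re (z : Cx) : R := fst z.
Definition Im (z : Cx) : R := snd z.
Definition RtoC (x : R) : Cx := (x, 0).
Definition Ci : Cx := (0, 1).
Definition Cadd (z w : Cx) : Cx := (fst z + fst w, snd z + snd w).
Definition Copp (z : Cx) : Cx := (- fst z, - snd z).
Definition Csub (z w : Cx) : Cx := Cadd z (Copp w).
Definition Cmul (z w : Cx) : Cx :=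
  (fst z * fst w - snd z * snd w, fst z * snd w + snd z * fst w).
Definition Cinv (z : Cx) : Cx :=
  (fst z / (fst z ^ 2 + snd z ^ 2), - snd z / (fst z ^ 2 + snd z ^ 2)).
Definition Cdiv (z w : Cx) : Cx := Cmul z (Cinv w).
Definition Cconj (z : Cx) : Cx := (fst z, - snd z).
Definition Cmod (z : Cx) : R := sqrt (fst z ^ 2 + snd z ^ 2).
Definition Cexp (z : Cx) : Cx := (exp (fst z) * cos (snd z), exp (fst z) * sin (snd z)).

(* principal argument, in (-PI, PI] *)
Definition Carg (z : Cx) : R :=
  let x := fst z in let y := snd z in
  if Rlt_dec 0 x then atan (y / x)
  else if Rlt_dec x 0 then
         (if Rle_dec 0 y then atan (y / x) + PI else atan (y / x) - PI)
  else if Rlt_dec 0 y then PI / 2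
  else if Rlt_dec y 0 then - (PI / 2) else 0.

Definition Cln (z : Cx) : Cx := (ln (Cmod z), Carg z).

Declare Scope C_scope.
Delimit Scope C_scope with C.
Infix "+" := Cadd : C_scope.
Infix "-" := Csub : C_scope.
Infix "*" := Cmul : C_scope.
Infix "/" := Cdiv : C_scope.
Notation "- z" := (Copp z) : C_scope.

Definition HasDer0 (f : R -> Cx) (l : Cx) : Prop :=
  derivable_pt_lim (fun t => fst (f t)) 0 (fst l) /\
  derivable_pt_lim (fun t => snd (f t)) 0 (snd l).

(* the derivative at 0 (meaningful when it exists) *)
Definition Der0 (f : R -> Cx) : Cx :=
  epsilon (inhabits (0, 0)) (fun l => HasDer0 f l).

Definition Dre (g : Cx -> Cx) (z : Cx) : Cx := Der0 (fun t => g (Cadd z (t, 0))).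
Definition Dim (g : Cx -> Cx) (z : Cx) : Cx := Der0 (fun t => g (Cadd z (0, t))).

Definition PartDiff (g : Cx -> Cx) (z : Cx) : Prop :=
  (exists l, HasDer0 (fun t => g (Cadd z (t, 0))) l) /\
  (exists l, HasDer0 (fun t => g (Cadd z (0, t))) l).

Definition Wd (g : Cx -> Cx) (z : Cx) : Cx :=
  Cmul (RtoC (/ 2)) (Csub (Dre g z) (Cmul Ci (Dim g z))).
Definition Wdb (g : Cx -> Cx) (z : Cx) : Cx :=
  Cmul (RtoC (/ 2)) (Cadd (Dre g z) (Cmul Ci (Dim g z))).

Definition dq  (F : Cx -> Cx -> Cx) : Cx -> Cx -> Cx := fun q z => Wd  (fun w => F w z) q.
Definition dqb (F : Cx -> Cx -> Cx) : Cx -> Cx -> Cx := fun q z => Wdb (fun w => F w z) q.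
Definition dz  (F : Cx -> Cx -> Cx) : Cx -> Cx -> Cx := fun q z => Wd  (F q) z.
Definition dzb (F : Cx -> Cx -> Cx) : Cx -> Cx -> Cx := fun q z => Wdb (F q) z.
Definition Diff_q (F : Cx -> Cx -> Cx) (q z : Cx) : Prop := PartDiff (fun w => F w z) q.
Definition Diff_z (F : Cx -> Cx -> Cx) (q z : Cx) : Prop := PartDiff (F q) z.

(* Convention: psi_{ab} = d_b (d_a psi). *)
Definition IsSolution (U : Cx -> Cx -> Prop) (psi : Cx -> Cx -> Cx) : Prop :=
  forall q z, U q z ->
    Diff_q psi q z /\ Diff_z psi q z /\
    Diff_q (dq psi) q z /\ Diff_z (dq psi) q z /\
    Diff_q (dqb psi) q z /\ Diff_z (dqb psi) q z /\
    Diff_z (dz psi) q z /\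
    (dqb (dq psi) q z * dzb (dz psi) q z - dzb (dq psi) q z * dz (dqb psi) q z)%C =
    (Cexp (dq psi q z + dqb psi q z) *
       (dqb (dq psi) q z * dqb (dq psi) q z - dq (dq psi) q z * dqb (dqb psi) q z))%C.

Definition Open2 (U : Cx -> Cx -> Prop) : Prop :=
  forall q z, U q z -> exists eps, 0 < eps /\
    forall q' z', Cmod (Csub q' q) < eps -> Cmod (Csub z' z) < eps -> U q' z'.

Definition ContinuousOn2 (U : Cx -> Cx -> Prop) (F : Cx -> Cx -> Cx) : Prop :=
  forall q z, U q z -> forall eps, 0 < eps -> exists delta, 0 < delta /\
    forall q' z', U q' z' -> Cmod (Csub q' q) < delta -> Cmod (Csub z' z) < delta ->
      Cmod (Csub (F q' z') (F q z)) < eps.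

Definition CDeriv (f : Cx -> Cx) (z l : Cx) : Prop :=
  forall eps, 0 < eps -> exists delta, 0 < delta /\
    forall h, h <> (0, 0) -> Cmod h < delta ->
      Cmod (Csub (Cdiv (Csub (f (Cadd z h)) (f z)) h) l) < eps.

Definition Smooth (f : R -> R) : Prop :=
  exists fs : nat -> R -> R, fs O = f /\
    forall n x, derivable_pt_lim (fs n) x (fs (S n) x).

(* y = i (qbar - q)/2  (a real number; we take its real part, the imaginary part is 0) *)
Definition yof (q : Cx) : R := Re (Cmul Ci (Cmul (Csub (Cconj q) q) (RtoC (/ 2)))).

(* Main.v *)
Require Import Defs.
From Stdlib Require Import Reals Lra Lia Psatz ClassicalEpsilon FunctionalExtensionality.
Open Scope R_scope.

Lemma dpl_eq f x l l' : derivable_pt_lim f x l -> l = l' -> derivable_pt_lim f x l'.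
Proof. intros H ->; exact H. Qed.
Lemma dpl_const (c x : R) : derivable_pt_lim (fun _ => c) x 0.
Proof. apply derivable_pt_lim_const. Qed.
Lemma dpl_id x : derivable_pt_lim (fun t => t) x 1.
Proof. apply derivable_pt_lim_id. Qed.
Lemma dpl_plus f g x a b : derivable_pt_lim f x a -> derivable_pt_lim g x b ->
  derivable_pt_lim (fun t => f t + g t) x (a + b).
Proof. apply derivable_pt_lim_plus. Qed.
Lemma dpl_minus f g x a b : derivable_pt_lim f x a -> derivable_pt_lim g x b ->
  derivable_pt_lim (fun t => f t - g t) x (a - b).
Proof. apply derivable_pt_lim_minus. Qed.
Lemma dpl_opp f x a : derivable_pt_lim f x a ->
  derivable_pt_lim (fun t => - f t) x (- a).
Proof. apply derivable_pt_lim_opp. Qed.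
Lemma dpl_mult f g x a b : derivable_pt_lim f x a -> derivable_pt_lim g x b ->
  derivable_pt_lim (fun t => f t * g t) x (a * g x + f x * b).
Proof. apply derivable_pt_lim_mult. Qed.
Lemma dpl_comp f g x a b : derivable_pt_lim f x a -> derivable_pt_lim g (f x) b ->
  derivable_pt_lim (fun t => g (f t)) x (b * a).
Proof. intros; apply (derivable_pt_lim_comp f g); auto. Qed.
Lemma dpl_inv f x a : derivable_pt_lim f x a -> f x <> 0 ->
  derivable_pt_lim (fun t => / f t) x (- a / (f x * f x)).
Proof.
  intros H Hn. eapply dpl_eq.
  - apply (derivable_pt_lim_ext (fun t => 1 / f t)); [intro; unfold Rdiv; ring|].
    apply (derivable_pt_lim_div (fun _ => 1) f); [apply dpl_const | exact H | exact Hn].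
  - unfold Rsqr. field. exact Hn.
Qed.
Lemma dpl_div f g x a b : derivable_pt_lim f x a -> derivable_pt_lim g x b -> g x <> 0 ->
  derivable_pt_lim (fun t => f t / g t) x ((a * g x - b * f x) / (g x * g x)).
Proof. intros. apply (derivable_pt_lim_div f g); auto. Qed.
Lemma dpl_pow2 f x a : derivable_pt_lim f x a ->
  derivable_pt_lim (fun t => f t ^ 2) x (2 * f x * a).
Proof. intros H. eapply dpl_eq.
  - apply (dpl_comp f (fun u => u ^ 2)); [exact H|]. apply derivable_pt_lim_pow.
  - simpl. ring.
Qed.
Lemma dpl_atan f x a : derivable_pt_lim f x a ->
  derivable_pt_lim (fun t => atan (f t)) x (/ (1 + f x ^ 2) * a).
Proof. intros H. apply (dpl_comp f atan); [exact H|]. apply derivable_pt_lim_atan. Qed.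
Lemma dpl_ln f x a : derivable_pt_lim f x a -> 0 < f x ->
  derivable_pt_lim (fun t => ln (f t)) x (/ f x * a).
Proof. intros H P. apply (dpl_comp f ln); [exact H|]. apply derivable_pt_lim_ln; exact P. Qed.

Ltac dpl := repeat first
  [ apply dpl_const | apply dpl_id | apply dpl_plus | apply dpl_minus | apply dpl_opp
  | apply dpl_mult | apply dpl_pow2 | apply dpl_atan | apply dpl_div | apply dpl_inv ].

Lemma HasDer0_unique f l1 l2 : HasDer0 f l1 -> HasDer0 f l2 -> l1 = l2.
Proof. intros [A B] [C D]. destruct l1, l2; simpl in *.
  f_equal; eapply uniqueness_limite; eauto. Qed.

Lemma Der0_eq f l : HasDer0 f l -> Der0 f = l.
Proof. intros H. unfold Der0. apply HasDer0_unique with f; [|exact H].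
  apply epsilon_spec. exists l; exact H. Qed.

Lemma HD_eq f l l' : HasDer0 f l -> l = l' -> HasDer0 f l'.
Proof. intros H ->; exact H. Qed.
Lemma HD_const (c : Cx) : HasDer0 (fun _ => c) (0,0).
Proof. split; apply dpl_const. Qed.
Lemma HD_add f g a b : HasDer0 f a -> HasDer0 g b ->
  HasDer0 (fun t => Cadd (f t) (g t)) (Cadd a b).
Proof. intros [A1 A2] [B1 B2]; split; simpl; apply dpl_plus; auto. Qed.
Lemma HD_opp f a : HasDer0 f a -> HasDer0 (fun t => Copp (f t)) (Copp a).
Proof. intros [A1 A2]; split; simpl; apply dpl_opp; auto. Qed.
Lemma HD_sub f g a b : HasDer0 f a -> HasDer0 g b ->
  HasDer0 (fun t => Csub (f t) (g t)) (Csub a b).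
Proof. intros; unfold Csub; apply HD_add; auto; apply HD_opp; auto. Qed.
Lemma HD_mul f g a b : HasDer0 f a -> HasDer0 g b ->
  HasDer0 (fun t => Cmul (f t) (g t)) (Cadd (Cmul a (g 0)) (Cmul (f 0) b)).
Proof. intros [A1 A2] [B1 B2]; split; simpl.
  - eapply dpl_eq; [apply dpl_minus; apply dpl_mult; eauto|]. cbv beta; ring.
  - eapply dpl_eq; [apply dpl_plus; apply dpl_mult; eauto|]. cbv beta; ring.
Qed.
Lemma HD_conj f a : HasDer0 f a -> HasDer0 (fun t => Cconj (f t)) (Cconj a).
Proof. intros [A1 A2]; split; simpl; auto. apply dpl_opp; auto. Qed.
Lemma HD_RtoC h a : derivable_pt_lim h 0 a -> HasDer0 (fun t => RtoC (h t)) (RtoC a).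
Proof. intros H; split; simpl; auto. apply dpl_const. Qed.
Lemma HD_lineR z : HasDer0 (fun t => Cadd z (t, 0)) (1, 0).
Proof. split; simpl; [eapply dpl_eq; [dpl|ring] | eapply dpl_eq; [dpl|ring]]. Qed.
Lemma HD_lineI z : HasDer0 (fun t => Cadd z (0, t)) (0, 1).
Proof. split; simpl; [eapply dpl_eq; [dpl|ring] | eapply dpl_eq; [dpl|ring]]. Qed.

Lemma HD_loc f g l d : 0 < d -> (forall t, Rabs t < d -> f t = g t) ->
  HasDer0 f l -> HasDer0 g l.
Proof.
  intros Hd E [A B]; split.
  - apply (derivable_pt_lim_locally_ext (fun t => fst (f t)) _ 0 (-d) d); [lra| |exact A].
    intros t Ht; rewrite E; auto; apply Rabs_def1; lra.
  - apply (derivable_pt_lim_locally_ext (fun t => snd (f t)) _ 0 (-d) d); [lra| |exact B].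
    intros t Ht; rewrite E; auto; apply Rabs_def1; lra.
Qed.

Lemma HD_pairR : HasDer0 (fun t => (t, 0)) (1, 0).
Proof. split; simpl; [apply dpl_id | apply dpl_const]. Qed.
Lemma HD_pairI : HasDer0 (fun t => (0, t)) (0, 1).
Proof. split; simpl; [apply dpl_const | apply dpl_id]. Qed.

Ltac HD := repeat first
  [ apply HD_const | apply HD_lineR | apply HD_lineI | apply HD_pairR | apply HD_pairI | apply HD_add | apply HD_sub | apply HD_opp | apply HD_mul
  | apply HD_conj | apply HD_lineR | apply HD_lineI ].

Lemma Wd_of g z a c :
  HasDer0 (fun t => g (Cadd z (t, 0))) a -> HasDer0 (fun t => g (Cadd z (0, t))) c ->
  PartDiff g z /\
  Wd g z = Cmul (RtoC (/2)) (Csub a (Cmul Ci c)) /\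
  Wdb g z = Cmul (RtoC (/2)) (Cadd a (Cmul Ci c)).
Proof.
  intros Ha Hc. unfold Wd, Wdb, Dre, Dim.
  rewrite (Der0_eq _ _ Ha), (Der0_eq _ _ Hc).
  split; [split; eauto|]; auto.
Qed.

Lemma Cmod_fst w : Rabs (fst w) <= Cmod w.
Proof. unfold Cmod. rewrite <- sqrt_Rsqr_abs. apply sqrt_le_1_alt. unfold Rsqr. simpl. nra. Qed.
Lemma Cmod_snd w : Rabs (snd w) <= Cmod w.
Proof. unfold Cmod. rewrite <- sqrt_Rsqr_abs. apply sqrt_le_1_alt. unfold Rsqr. simpl. nra. Qed.
Lemma Cmod_real h : Cmod (h, 0) = Rabs h.
Proof. unfold Cmod; simpl. rewrite <- sqrt_Rsqr_abs. f_equal. unfold Rsqr; ring. Qed.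
Lemma Cmod_imag h : Cmod (0, h) = Rabs h.
Proof. unfold Cmod; simpl. rewrite <- sqrt_Rsqr_abs. f_equal. unfold Rsqr; ring. Qed.
Lemma Cadd_00 z : Cadd z (0, 0) = z.
Proof. destruct z; unfold Cadd; simpl; f_equal; ring. Qed.

Lemma CD_lineR f z l : CDeriv f z l -> HasDer0 (fun t => f (Cadd z (t, 0))) l.
Proof.
  intros H. split; intros eps Heps; destruct (H eps Heps) as [d [Hd Hf]];
  exists (mkposreal d Hd); intros h Hh Hhd; simpl in *;
  (assert (Hn : (h,0) <> (0,0)) by (intro E; injection E; lra));
  (assert (Hm: Cmod (h,0) < d) by (rewrite Cmod_real; exact Hhd));
  specialize (Hf _ Hn Hm); rewrite Rplus_0_l, Cadd_00;
  refine (Rle_lt_trans _ _ _ _ Hf).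
  - match goal with |- Rabs ?a <= _ => replace a with (fst (Csub (Cdiv (Csub (f (Cadd z (h, 0))) (f z)) (h, 0)) l)) end.
    apply Cmod_fst. unfold Csub, Cdiv, Cmul, Cinv, Cadd, Copp; simpl. field. exact Hh.
  - match goal with |- Rabs ?a <= _ => replace a with (snd (Csub (Cdiv (Csub (f (Cadd z (h, 0))) (f z)) (h, 0)) l)) end.
    apply Cmod_snd. unfold Csub, Cdiv, Cmul, Cinv, Cadd, Copp; simpl. field. exact Hh.
Qed.

Lemma CD_lineI f z l : CDeriv f z l -> HasDer0 (fun t => f (Cadd z (0, t))) (Cmul Ci l).
Proof.
  intros H. split; intros eps Heps; destruct (H eps Heps) as [d [Hd Hf]];
  exists (mkposreal d Hd); intros h Hh Hhd; simpl in *;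
  (assert (Hn : (0,h) <> (0,0)) by (intro E; injection E; lra));
  (assert (Hm: Cmod (0,h) < d) by (rewrite Cmod_imag; exact Hhd));
  specialize (Hf _ Hn Hm); rewrite Rplus_0_l, Cadd_00;
  refine (Rle_lt_trans _ _ _ _ Hf).
  - match goal with |- Rabs ?a <= _ => replace a with (- snd (Csub (Cdiv (Csub (f (Cadd z (0, h))) (f z)) (0, h)) l)) end.
    rewrite Rabs_Ropp. apply Cmod_snd. unfold Csub, Cdiv, Cmul, Cinv, Cadd, Copp; simpl. field. exact Hh.
  - match goal with |- Rabs ?a <= _ => replace a with (fst (Csub (Cdiv (Csub (f (Cadd z (0, h))) (f z)) (0, h)) l)) end.
    apply Cmod_fst. unfold Csub, Cdiv, Cmul, Cinv, Cadd, Copp; simpl. field. exact Hh.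
Qed.

Lemma ln_exp2 a : ln (exp a * exp a) = 2 * a.
Proof. rewrite <- exp_plus, ln_exp. ring. Qed.

Lemma HD_log (Lam Gam : R -> Cx) (g : Cx) d :
  0 < d -> (forall t, Rabs t < d -> Cexp (Lam t) = Gam t) ->
  (forall eps, 0 < eps -> exists del, 0 < del /\
     forall t, Rabs t < del -> Cmod (Csub (Lam t) (Lam 0)) < eps) ->
  HasDer0 Gam g -> Gam 0 <> (0,0) ->
  HasDer0 Lam (Cdiv g (Gam 0)).
Proof.
  intros Hd HE Hc [G1 G2] Hn0.
  assert (HG1 : forall t, Rabs t < d -> fst (Gam t) = exp (fst (Lam t)) * cos (snd (Lam t))).
  { intros t Ht; rewrite <- HE; auto. }
  assert (HG2 : forall t, Rabs t < d -> snd (Gam t) = exp (fst (Lam t)) * sin (snd (Lam t))).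
  { intros t Ht; rewrite <- HE; auto. }
  assert (D0 : fst (Gam 0) ^ 2 + snd (Gam 0) ^ 2 <> 0).
  { intro E. apply Hn0. destruct (Gam 0) as [a b]; simpl in *. f_equal; nra. }
  assert (Hmod : forall t, Rabs t < d ->
     fst (Gam t) ^ 2 + snd (Gam t) ^ 2 = exp (fst (Lam t)) * exp (fst (Lam t))).
  { intros t Ht. rewrite HG1, HG2 by auto.
    pose proof (sin2_cos2 (snd (Lam t))) as S. unfold Rsqr in S.
    transitivity (exp (fst (Lam t)) * exp (fst (Lam t)) *
       (sin (snd (Lam t)) * sin (snd (Lam t)) + cos (snd (Lam t)) * cos (snd (Lam t)))); [ring|].
    rewrite S; ring. }
  split.
  -
    apply (derivable_pt_lim_locally_ext
      (fun t => / 2 * ln (fst (Gam t) ^ 2 + snd (Gam t) ^ 2)) _ 0 (-d) d); [lra| |].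
    + intros t Ht. rewrite Hmod by (apply Rabs_def1; lra). rewrite ln_exp2. field.
    + eapply dpl_eq.
      * apply dpl_mult; [apply dpl_const|]. apply dpl_ln.
        { apply dpl_plus; apply dpl_pow2; eassumption. }
        { pose proof (pow2_ge_0 (fst (Gam 0))); pose proof (pow2_ge_0 (snd (Gam 0))). lra. }
      * unfold Cdiv, Cmul, Cinv; simpl. field. intro HHH; apply D0; nra.
  -
    destruct (Hc (PI/2)) as [del [Hdel Hc']]. { pose proof PI_RGT_0; lra. }
    set (del' := Rmin d del).
    assert (Hdel' : 0 < del') by (apply Rmin_pos; auto).
    set (N := fun t => snd (Gam t) * fst (Gam 0) - fst (Gam t) * snd (Gam 0)).
    set (M := fun t => fst (Gam t) * fst (Gam 0) + snd (Gam t) * snd (Gam 0)).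
    apply (derivable_pt_lim_locally_ext
      (fun t => snd (Lam 0) + atan (N t / M t)) _ 0 (-del') del'); [lra| |].
    + intros t Ht.
      assert (Ht1 : Rabs t < d) by (apply Rabs_def1; unfold del' in *; pose proof (Rmin_l d del); lra).
      assert (Ht2 : Rabs t < del) by (apply Rabs_def1; unfold del' in *; pose proof (Rmin_r d del); lra).
      assert (A : Rabs (snd (Lam t) - snd (Lam 0)) < PI/2).
      { eapply Rle_lt_trans; [|apply (Hc' t Ht2)].
        replace (snd (Lam t) - snd (Lam 0)) with (snd (Csub (Lam t) (Lam 0))) by (unfold Csub, Cadd, Copp; simpl; ring).
        apply Cmod_snd. }
      assert (Ht0 : Rabs 0 < d) by (rewrite Rabs_R0; exact Hd).
      set (al := snd (Lam t) - snd (Lam 0)).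
      assert (Hcos : 0 < cos al).
      { destruct (Rabs_def2 _ _ A) as [A1 A2]. apply cos_gt_0; auto. }
      assert (EN : N t = exp (fst (Lam t)) * exp (fst (Lam 0)) * sin al).
      { unfold N, al. rewrite sin_minus, !HG1, !HG2 by auto. ring. }
      assert (EM : M t = exp (fst (Lam t)) * exp (fst (Lam 0)) * cos al).
      { unfold M, al. rewrite cos_minus, !HG1, !HG2 by auto. ring. }
      rewrite EN, EM.
      pose proof (exp_pos (fst (Lam t))); pose proof (exp_pos (fst (Lam 0))).
      replace (exp (fst (Lam t)) * exp (fst (Lam 0)) * sin al /
              (exp (fst (Lam t)) * exp (fst (Lam 0)) * cos al)) with (tan al).
      2:{ unfold tan. field. repeat split; apply Rgt_not_eq; assumption. }
      destruct (Rabs_def2 _ _ A). rewrite atan_tan. { unfold al; ring. } split; assumption.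
    + assert (N0 : N 0 = 0) by (unfold N; ring).
      assert (M0 : M 0 = fst (Gam 0) ^ 2 + snd (Gam 0) ^ 2) by (unfold M; ring).
      eapply dpl_eq.
      * apply dpl_plus; [apply dpl_const|]. apply dpl_atan.
        apply dpl_div; [unfold N; dpl; eassumption | unfold M; dpl; eassumption | ].
        rewrite M0; exact D0.
      * cbv beta. fold (N 0) (M 0). rewrite N0, M0. unfold Cdiv, Cmul, Cinv; simpl.
        field. intro HHH; apply D0; nra.
Qed.

Section Trig.
Variable th : R.
Hypothesis Hth : - PI < th < PI.

Lemma F_cos_pos : 0 < cos th -> - (PI/2) < th < PI/2.
Proof using Hth.
  intros Hc. pose proof PI_RGT_0. split.
  - destruct (Rlt_le_dec (-(PI/2)) th) as [h|h]; auto.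
    rewrite <- cos_neg in Hc. pose proof (cos_le_0 (-th) ltac:(lra) ltac:(lra)). lra.
  - destruct (Rlt_le_dec th (PI/2)) as [h|h]; auto.
    pose proof (cos_le_0 th ltac:(lra) ltac:(lra)). lra.
Qed.
Lemma F_cos_neg : cos th < 0 -> th < - (PI/2) \/ PI/2 < th.
Proof using Hth.
  intros Hc. pose proof PI_RGT_0.
  destruct (Rlt_le_dec th (-(PI/2))) as [h|h]; auto.
  destruct (Rlt_le_dec (PI/2) th) as [h'|h']; auto.
  pose proof (cos_ge_0 th h h'). lra.
Qed.
Lemma F_sin_nonneg : 0 <= sin th -> 0 <= th.
Proof using Hth.
  intros Hs. destruct (Rle_lt_dec 0 th) as [h|h]; auto.
  pose proof (sin_gt_0 (-th) ltac:(lra) ltac:(lra)). rewrite sin_neg in H. lra.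
Qed.
Lemma F_sin_neg : sin th < 0 -> th < 0.
Proof using Hth.
  intros Hs. destruct (Rle_lt_dec 0 th) as [h|h]; auto.
  pose proof (sin_ge_0 th h ltac:(lra)). lra.
Qed.
Lemma F_cos0_pos : cos th = 0 -> 0 < sin th -> th = PI/2.
Proof using Hth.
  intros Hc Hs. pose proof PI_RGT_0.
  assert (0 <= th) by (apply F_sin_nonneg; lra).
  destruct (Rtotal_order th (PI/2)) as [h|[h|h]]; auto.
  - pose proof (cos_gt_0 th ltac:(lra) h). lra.
  - pose proof (cos_lt_0 th h ltac:(lra)). lra.
Qed.
Lemma F_cos0_neg : cos th = 0 -> sin th < 0 -> th = -(PI/2).
Proof using Hth.
  intros Hc Hs. pose proof PI_RGT_0.
  assert (th < 0) by (apply F_sin_neg; lra).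
  destruct (Rtotal_order th (-(PI/2))) as [h|[h|h]]; auto.
  - rewrite <- cos_neg in Hc. pose proof (cos_lt_0 (-th) ltac:(lra) ltac:(lra)). lra.
  - pose proof (cos_gt_0 th h ltac:(lra)). lra.
Qed.
End Trig.

Lemma tan_shift a : cos a <> 0 -> tan (a - PI) = tan a /\ tan (a + PI) = tan a.
Proof.
  intros Hc. unfold tan. rewrite sin_minus, cos_minus, sin_plus, cos_plus, sin_PI, cos_PI.
  split; field; lra.
Qed.

Lemma Carg_char m th : 0 < m -> - PI < th < PI ->
  Carg (m * cos th, m * sin th) = th.
Proof.
  intros Hm Hth. pose proof PI_RGT_0.
  unfold Carg; simpl.
  destruct (Rlt_dec 0 (m * cos th)) as [h1|h1].
  - assert (Hc : 0 < cos th) by nra.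
    replace (m * sin th / (m * cos th)) with (tan th) by (unfold tan; field; lra).
    apply atan_tan. apply F_cos_pos; auto.
  - destruct (Rlt_dec (m * cos th) 0) as [h2|h2].
    + assert (Hc : cos th < 0) by nra.
      destruct (tan_shift th ltac:(lra)) as [T1 T2].
      replace (m * sin th / (m * cos th)) with (tan th) by (unfold tan; field; lra).
      destruct (Rle_dec 0 (m * sin th)) as [h3|h3].
      * assert (Hs : 0 <= sin th) by nra.
        pose proof (F_sin_nonneg th Hth Hs).
        destruct (F_cos_neg th Hth Hc) as [h|h]; [lra|].
        rewrite <- T1, atan_tan; lra.
      * assert (Hs : sin th < 0) by nra.
        pose proof (F_sin_neg th Hth Hs).
        destruct (F_cos_neg th Hth Hc) as [h|h]; [|lra].
        rewrite <- T2, atan_tan; lra.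
    + assert (Hc : cos th = 0) by nra.
      destruct (Rlt_dec 0 (m * sin th)) as [h3|h3].
      * symmetry; apply F_cos0_pos; auto; nra.
      * destruct (Rlt_dec (m * sin th) 0) as [h4|h4].
        -- symmetry; apply F_cos0_neg; auto; nra.
        -- exfalso. assert (sin th = 0) by nra. pose proof (sin2_cos2 th).
           unfold Rsqr in *. rewrite H0, Hc in H1. lra.
Qed.

Lemma ratio_eq x u : 0 < x ->
  Cdiv (x, - u) (x, u) = (1 * cos (-2 * atan (u / x)), 1 * sin (-2 * atan (u / x))).
Proof.
  intros Hx. set (a := atan (u / x)).
  replace (-2 * a) with (- (2 * a)) by ring. rewrite cos_neg, sin_neg, cos_2a, sin_2a.
  unfold a. rewrite cos_atan, sin_atan.
  assert (HS : 0 < 1 + (u/x)²) by (unfold Rsqr; nra).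
  pose proof (sqrt_lt_R0 _ HS) as Sp.
  pose proof (sqrt_sqrt _ (Rlt_le _ _ HS)) as SS.
  set (S := sqrt (1 + (u / x)²)) in *.
  unfold Cdiv, Cmul, Cinv; simpl.
  assert (D : x * x + u * u <> 0) by nra.
  f_equal.
  - transitivity ((1 - (u/x)*(u/x)) / (S * S)); [|field; lra].
    rewrite SS. unfold Rsqr. field. split; lra.
  - transitivity (- (2 * (u/x)) / (S * S)); [|field; lra].
    rewrite SS. unfold Rsqr. field. split; lra.
Qed.

Lemma Cln_ratio x u : 0 < x -> Cln (Cdiv (x, - u) (x, u)) = (0, -2 * atan (u / x)).
Proof.
  intros Hx. rewrite ratio_eq by auto. unfold Cln. f_equal.
  - unfold Cmod; simpl. replace ((1 * cos (-2 * atan (u / x))) * ((1 * cos (-2 * atan (u / x))) * 1) +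
      (1 * sin (-2 * atan (u / x))) * ((1 * sin (-2 * atan (u / x))) * 1)) with 1.
    + rewrite sqrt_1. apply ln_1.
    + pose proof (sin2_cos2 (-2 * atan (u / x))). unfold Rsqr in H. lra.
  - apply Carg_char; [lra|]. pose proof (atan_bound (u/x)). lra.
Qed.

Definition Bf (b : Cx -> Cx) (L : Cx -> Cx -> Cx) (G : Cx -> R) (q z : Cx) : Cx :=
  (((q + b z) * L q z) + ((Cconj q + Cconj (b z)) * Cconj (L q z))
     - ((q + Cconj q) * (Cln (z + Cconj z) + RtoC 1)) + RtoC (G z))%C.

Lemma yof_eq q : yof q = snd q.
Proof. unfold yof, Re, Cmul, Csub, Cadd, Copp, Cconj, Ci, RtoC; simpl. field. Qed.

Lemma Cmod_sub_lineR q t : Cmod (Csub (Cadd q (t, 0)) q) = Rabs t.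
Proof. rewrite <- Cmod_real. f_equal. unfold Csub, Cadd, Copp; simpl; f_equal; ring. Qed.
Lemma Cmod_sub_lineI q t : Cmod (Csub (Cadd q (0, t)) q) = Rabs t.
Proof. rewrite <- Cmod_imag. f_equal. unfold Csub, Cadd, Copp; simpl; f_equal; ring. Qed.
Lemma Cmod_sub_0 q : Cmod (Csub q q) = 0.
Proof. unfold Cmod, Csub, Cadd, Copp; simpl. replace ((fst q + - fst q) * ((fst q + - fst q) * 1) + (snd q + - snd q) * ((snd q + - snd q) * 1)) with 0 by ring. apply sqrt_0. Qed.

Lemma Cadd_0l w : Cadd (0,0) w = w.
Proof. destruct w; unfold Cadd; simpl; f_equal; ring. Qed.

Lemma PartDiff_lines g z : PartDiff g z ->
  HasDer0 (fun t => g (Cadd z (t, 0))) (Dre g z) /\ HasDer0 (fun t => g (Cadd z (0, t))) (Dim g z).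
Proof. intros [[a Ha] [c Hc]]. unfold Dre, Dim. rewrite (Der0_eq _ _ Ha), (Der0_eq _ _ Hc). auto. Qed.

Lemma HD_lnR x0 : 0 < x0 -> forall c, derivable_pt_lim (fun t => ln ((x0 + t) + (x0 + t)) * c) 0 (/ x0 * c).
Proof. intros Hx c. eapply dpl_eq. apply dpl_mult; [apply dpl_ln; [dpl|]|apply dpl_const]. lra. cbv beta. field. lra. Qed.

Section Master.
Variables (U : Cx -> Cx -> Prop) (b b' : Cx -> Cx) (L : Cx -> Cx -> Cx) (G : Cx -> R).
Hypothesis HU : Open2 U.
Hypothesis Hz : forall q z, U q z -> 0 < Re (Cadd z (Cconj z)).
Hypothesis Hb : forall q z, U q z -> CDeriv b z (b' z).
Hypothesis Hb' : forall q z, U q z -> exists l, CDeriv b' z l.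
Hypothesis HLexp : forall q z, U q z -> Cexp (L q z) = Cadd q (b z).
Hypothesis HLcont : ContinuousOn2 U L.
Hypothesis HG : forall q z, U q z ->
      PartDiff (fun w => RtoC (G w)) z /\
      PartDiff (Wd (fun w => RtoC (G w))) z /\
      Wdb (Wd (fun w => RtoC (G w))) z =
        Cdiv (Cadd (b z) (Cconj (b z)))
             (Cmul (Cadd z (Cconj z)) (Cadd z (Cconj z))).

Lemma Ux q z : U q z -> 0 < fst z.
Proof. intros H. pose proof (Hz q z H). unfold Re, Cadd, Cconj in H0; simpl in H0. lra. Qed.

Lemma Qnz q z : U q z -> Cadd q (b z) <> (0,0).
Proof. intros H E. pose proof (HLexp q z H) as E2. rewrite E in E2. unfold Cexp in E2.
  injection E2; intros E3 E4. pose proof (exp_pos (fst (L q z))).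
  pose proof (sin2_cos2 (snd (L q z))). unfold Rsqr in H1.
  assert (cos (snd (L q z)) = 0) by (apply Rmult_eq_reg_l with (exp (fst (L q z))); lra).
  assert (sin (snd (L q z)) = 0) by (apply Rmult_eq_reg_l with (exp (fst (L q z))); lra).
  rewrite H2, H3 in H1. lra. Qed.

Lemma U_near q z : U q z -> exists d, 0 < d /\ forall t, Rabs t < d ->
  U (Cadd q (t,0)) z /\ U (Cadd q (0,t)) z /\ U q (Cadd z (t,0)) /\ U q (Cadd z (0,t)).
Proof.
  intros H. destruct (HU q z H) as [e [He Hf]]. exists e; split; auto. intros t Ht.
  repeat split; apply Hf; rewrite ?Cmod_sub_lineR, ?Cmod_sub_lineI, ?Cmod_sub_0; auto.
Qed.

Lemma HD_L (qp zp : R -> Cx) (q z g : Cx) : U q z -> qp 0 = q -> zp 0 = z ->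
  (forall t, Cmod (Csub (qp t) q) <= Rabs t) -> (forall t, Cmod (Csub (zp t) z) <= Rabs t) ->
  HasDer0 (fun t => Cadd (qp t) (b (zp t))) g ->
  HasDer0 (fun t => L (qp t) (zp t)) (Cdiv g (Cadd q (b z))).
Proof.
  intros H Hq0 Hz0 Hqp Hzp Hg.
  destruct (HU q z H) as [e [He Hf]].
  assert (HUt : forall t, Rabs t < e -> U (qp t) (zp t)).
  { intros t Ht; apply Hf; eapply Rle_lt_trans; eauto. }
  replace (Cadd q (b z)) with ((fun t => Cadd (qp t) (b (zp t))) 0) by (rewrite Hq0, Hz0; auto).
  apply (HD_log (fun t => L (qp t) (zp t)) (fun t => Cadd (qp t) (b (zp t))) g e); auto.
  - intros eps Heps. destruct (HLcont q z H eps Heps) as [dl [Hdl Hc]].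
    exists (Rmin e dl); split; [apply Rmin_pos; auto|]. intros t Ht.
    assert (Rabs t < e) by (eapply Rlt_le_trans; [exact Ht| apply Rmin_l]).
    assert (Rabs t < dl) by (eapply Rlt_le_trans; [exact Ht| apply Rmin_r]).
    rewrite Hq0, Hz0. apply Hc; auto; eapply Rle_lt_trans; eauto.
  - cbv beta. rewrite Hq0, Hz0. apply Qnz; auto.
Qed.

Lemma lineR_le z t : Cmod (Csub (Cadd z (t,0)) z) <= Rabs t.
Proof. rewrite Cmod_sub_lineR; lra. Qed.
Lemma lineI_le z t : Cmod (Csub (Cadd z (0,t)) z) <= Rabs t.
Proof. rewrite Cmod_sub_lineI; lra. Qed.
Lemma const_le z t : Cmod (Csub z z) <= Rabs t.
Proof. rewrite Cmod_sub_0; apply Rabs_pos. Qed.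

Lemma HD_LqR q z : U q z -> HasDer0 (fun t => L (Cadd q (t,0)) z) (Cdiv (1,0) (Cadd q (b z))).
Proof. intros H. apply (HD_L (fun t => Cadd q (t,0)) (fun _ => z)); auto using lineR_le, const_le.
  apply Cadd_00. eapply HD_eq; [HD|]. unfold Cadd; simpl; f_equal; ring. Qed.
Lemma HD_LqI q z : U q z -> HasDer0 (fun t => L (Cadd q (0,t)) z) (Cdiv (0,1) (Cadd q (b z))).
Proof. intros H. apply (HD_L (fun t => Cadd q (0,t)) (fun _ => z)); auto using lineI_le, const_le.
  apply Cadd_00. eapply HD_eq; [HD|]. unfold Cadd; simpl; f_equal; ring. Qed.
Lemma HD_LzR q z : U q z -> HasDer0 (fun t => L q (Cadd z (t,0))) (Cdiv (b' z) (Cadd q (b z))).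
Proof. intros H. apply (HD_L (fun _ => q) (fun t => Cadd z (t,0))); auto using lineR_le, const_le.
  apply Cadd_00. eapply HD_eq; [apply HD_add; [apply HD_const| apply CD_lineR; eauto]|].
  apply Cadd_0l. Qed.
Lemma HD_LzI q z : U q z -> HasDer0 (fun t => L q (Cadd z (0,t))) (Cdiv (Cmul Ci (b' z)) (Cadd q (b z))).
Proof. intros H. apply (HD_L (fun _ => q) (fun t => Cadd z (0,t))); auto using lineI_le, const_le.
  apply Cadd_00. eapply HD_eq; [apply HD_add; [apply HD_const| apply CD_lineI; eauto]|].
  apply Cadd_0l. Qed.


Lemma Cln2 z : 0 < fst z -> Cln (Cadd z (Cconj z)) = RtoC (ln (fst z + fst z)).
Proof.
  intros Hx. unfold Cln, RtoC, Cmod, Carg, Cadd, Cconj; simpl. f_equal.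
  - f_equal. replace ((fst z + fst z) * ((fst z + fst z) * 1) + (snd z + - snd z) * ((snd z + - snd z) * 1))
      with (Rsqr (fst z + fst z)) by (unfold Rsqr; ring).
    rewrite sqrt_Rsqr_abs. apply Rabs_right. lra.
  - destruct (Rlt_dec 0 (fst z + fst z)); [|lra].
    replace ((snd z + - snd z) / (fst z + fst z)) with 0 by (field; lra). apply atan_0.
Qed.

Lemma HD_Cln2R z : 0 < fst z ->
  HasDer0 (fun t => Cln (Cadd (Cadd z (t,0)) (Cconj (Cadd z (t,0))))) (RtoC (/ fst z)).
Proof.
  intros Hx. apply (HD_loc (fun t => RtoC (ln ((fst z + t) + (fst z + t)) * 1)) _ _ (fst z)); auto.
  - intros t Ht. rewrite Cln2. { simpl. rewrite Rmult_1_r; auto. }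
    simpl. apply Rabs_def2 in Ht. lra.
  - eapply HD_eq. apply HD_RtoC. apply HD_lnR; auto. f_equal; ring.
Qed.
Lemma HD_Cln2I z : 0 < fst z ->
  HasDer0 (fun t => Cln (Cadd (Cadd z (0,t)) (Cconj (Cadd z (0,t))))) (0,0).
Proof.
  intros Hx. apply (HD_loc (fun t => RtoC (ln (fst z + fst z))) _ _ 1); [lra| |apply HD_const].
  intros t Ht. rewrite Cln2; simpl; rewrite ?Rplus_0_r; auto.
Qed.

Lemma dpl_shift0 (h : R -> R) y a : derivable_pt_lim h y a ->
  derivable_pt_lim (fun t => h (y + t)) 0 a.
Proof. intros H. eapply dpl_eq. apply (dpl_comp (fun t => y + t) h). dpl.
  rewrite Rplus_0_r. exact H. ring. Qed.
Lemma HD_RqR (h : R -> R) q : HasDer0 (fun t => RtoC (h (snd (Cadd q (t,0))))) (0,0).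
Proof. apply (HD_loc (fun _ => RtoC (h (snd q))) _ _ 1); [lra| |apply HD_const].
  intros t _; simpl; rewrite Rplus_0_r; auto. Qed.
Lemma HD_RqI (h : R -> R) q a : derivable_pt_lim h (snd q) a ->
  HasDer0 (fun t => RtoC (h (snd (Cadd q (0,t))))) (RtoC a).
Proof. intros H. apply HD_RtoC. simpl. apply dpl_shift0; auto. Qed.

Variables (rho rhoy rhoyy rhox rhov rhoyx rhoyv rhoxx rhoxv rhovx rhovv : R -> Cx -> R).
Hypothesis R1 : forall y z, 0 < fst z -> derivable_pt_lim (fun t => rho t z) y (rhoy y z).
Hypothesis R2 : forall y z, 0 < fst z -> derivable_pt_lim (fun t => rhoy t z) y (rhoyy y z).
Hypothesis R3 : forall y z, 0 < fst z -> derivable_pt_lim (fun t => rho y (Cadd z (t,0))) 0 (rhox y z).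
Hypothesis R4 : forall y z, 0 < fst z -> derivable_pt_lim (fun t => rho y (Cadd z (0,t))) 0 (rhov y z).
Hypothesis R5 : forall y z, 0 < fst z -> derivable_pt_lim (fun t => rhoy y (Cadd z (t,0))) 0 (rhoyx y z).
Hypothesis R6 : forall y z, 0 < fst z -> derivable_pt_lim (fun t => rhoy y (Cadd z (0,t))) 0 (rhoyv y z).
Hypothesis R7a : forall y z, 0 < fst z -> derivable_pt_lim (fun t => rhox y (Cadd z (t,0))) 0 (rhoxx y z).
Hypothesis R7b : forall y z, 0 < fst z -> derivable_pt_lim (fun t => rhox y (Cadd z (0,t))) 0 (rhoxv y z).
Hypothesis R7c : forall y z, 0 < fst z -> derivable_pt_lim (fun t => rhov y (Cadd z (t,0))) 0 (rhovx y z).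
Hypothesis R7d : forall y z, 0 < fst z -> derivable_pt_lim (fun t => rhov y (Cadd z (0,t))) 0 (rhovv y z).
Hypothesis R8 : forall y z, 0 < fst z -> rhoxx y z + rhovv y z = 0 /\ rhoxv y z = rhovx y z.
Hypothesis R9 : forall y z, 0 < fst z ->
  rhoyv y z * rhoyv y z + rhoyx y z * rhoyx y z = 4 * rhoyv y z / fst z.

Variable psi : Cx -> Cx -> Cx.
Hypothesis Hpsi : forall q z, 0 < fst z -> psi q z = Cadd (Bf b L G q z) (RtoC (rho (yof q) z)).

Definition E1 q z := Csub (Csub (L q z) (RtoC (ln (fst z + fst z))))
   (Cmul (Cmul Ci (RtoC (/2))) (RtoC (rhoy (snd q) z))).
Definition E1b q z := Cadd (Csub (Cconj (L q z)) (RtoC (ln (fst z + fst z))))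
   (Cmul (Cmul Ci (RtoC (/2))) (RtoC (rhoy (snd q) z))).

Lemma psi_qR q z : 0 < fst z ->
  (fun t => psi (Cadd q (t,0)) z) = (fun t => Cadd (Bf b L G (Cadd q (t,0)) z) (RtoC (rho (snd (Cadd q (t,0))) z))).
Proof. intros H; apply functional_extensionality; intro t; rewrite Hpsi, yof_eq; auto. Qed.
Lemma psi_qI q z : 0 < fst z ->
  (fun t => psi (Cadd q (0,t)) z) = (fun t => Cadd (Bf b L G (Cadd q (0,t)) z) (RtoC (rho (snd (Cadd q (0,t))) z))).
Proof. intros H; apply functional_extensionality; intro t; rewrite Hpsi, yof_eq; auto. Qed.

Lemma Qnz2 q z : U q z -> (fst q + fst (b z)) ^ 2 + (snd q + snd (b z)) ^ 2 <> 0.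
Proof. intros H E. apply (Qnz q z H). unfold Cadd.
  pose proof (pow2_ge_0 (fst q + fst (b z))). pose proof (pow2_ge_0 (snd q + snd (b z))).
  f_equal; apply Rsqr_eq_0; unfold Rsqr; simpl in *; lra. Qed.

Ltac HDq H := repeat first [ apply HD_const | apply HD_lineR | apply HD_lineI | apply HD_pairR | apply HD_pairI
  | apply HD_add | apply HD_sub | apply HD_opp | apply HD_mul | apply HD_conj
  | apply (HD_LqR _ _ H) | apply (HD_LqI _ _ H)
  | apply (HD_RqR (fun y => rho y _)) | apply (HD_RqI (fun y => rho y _)); apply R1; apply Ux with (1 := H) ].

Definition Ez q z := Cadd (Cadd (Csub (Cmul (b' z) (Cadd (L q z) (RtoC 1))) (RtoC (fst q / fst z)))
   (Wd (fun w => RtoC (G w)) z))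
   (Cmul (RtoC (/2)) (Csub (RtoC (rhox (snd q) z)) (Cmul Ci (RtoC (rhov (snd q) z))))).

Definition qq (q z : Cx) := Csub (Cdiv (1,0) (Cadd q (b z))) (RtoC (rhoyy (snd q) z / 4)).
Definition qqb (q z : Cx) : Cx := RtoC (rhoyy (snd q) z / 4).
Definition qbqb (q z : Cx) := Csub (Cconj (Cdiv (1,0) (Cadd q (b z)))) (RtoC (rhoyy (snd q) z / 4)).
Definition qzb (q z : Cx) : Cx := ((rhoyv (snd q) z / 2 - / fst z) / 2, - rhoyx (snd q) z / 4).
Definition qbz (q z : Cx) : Cx := ((rhoyv (snd q) z / 2 - / fst z) / 2, rhoyx (snd q) z / 4).
Definition zzb (q z : Cx) := Cadd (RtoC (fst q / (2 * fst z * fst z)))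
  (Cadd (Wdb (Wd (fun w => RtoC (G w))) z)
     ((rhoxx (snd q) z + rhovv (snd q) z) / 4, (rhoxv (snd q) z - rhovx (snd q) z) / 4)).

Lemma Cconj_add a c : Cadd (Cconj a) (Cconj c) = Cconj (Cadd a c).
Proof. unfold Cconj, Cadd; simpl; f_equal; ring. Qed.
Lemma Cmul_conj a c : Cmul (Cconj a) (Cconj c) = Cconj (Cmul a c).
Proof. unfold Cconj, Cmul; simpl; f_equal; ring. Qed.
Lemma Cmul_div w a : w <> (0,0) -> Cmul w (Cdiv a w) = a.
Proof. intros Hw. destruct w as [w1 w2], a as [a1 a2].
  assert (w1 ^ 2 + w2 ^ 2 <> 0).
  { intro E. apply Hw. pose proof (pow2_ge_0 w1). pose proof (pow2_ge_0 w2).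
    f_equal; apply Rsqr_eq_0; unfold Rsqr; simpl in *; lra. }
  unfold Cdiv, Cmul, Cinv; simpl. f_equal; field; intro E; apply H; simpl; nra. Qed.

Ltac cx_field H :=
  cbv beta; rewrite ?Cadd_00, ?Cln2 by (apply Ux with (1 := H));
  rewrite ?Cconj_add, ?Cmul_conj, ?Cmul_div by (apply Qnz with (1 := H));
  unfold E1, E1b, Ez, Wd, Wdb, qq, qqb, qbqb, qzb, qbz, zzb, Cdiv, Cinv, Csub; unfold Cadd, Copp, Cmul, Cconj, RtoC, Ci; cbn [fst snd];
  f_equal; field; repeat split; first [apply Qnz2 with (1:=H) | pose proof (Ux _ _ H); lra].

Lemma dq_first q z : U q z ->
  Diff_q psi q z /\ dq psi q z = E1 q z /\ dqb psi q z = E1b q z.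
Proof.
  intros H. pose proof (Ux q z H) as Hx.
  edestruct (Wd_of (fun w => psi w z) q) as [PD [E Eb]].
  { cbv beta. rewrite psi_qR by auto. unfold Bf. Time HDq H. }
  { cbv beta. rewrite psi_qI by auto. unfold Bf. HDq H. }
  split; [exact PD|]. unfold dq, dqb. rewrite E, Eb. Time (split; cx_field H).
Qed.

Lemma psi_z q z d : 0 < fst z -> d <= fst z ->
  forall t, Rabs t < d -> psi q (Cadd z (t,0)) = Cadd (Bf b L G q (Cadd z (t,0))) (RtoC (rho (snd q) (Cadd z (t,0)))).
Proof. intros Hx Hd t Ht. apply Rabs_def2 in Ht. rewrite Hpsi, yof_eq; auto. simpl; lra. Qed.
Lemma psi_zI q z : 0 < fst z ->
  forall t, Rabs t < 1 -> psi q (Cadd z (0,t)) = Cadd (Bf b L G q (Cadd z (0,t))) (RtoC (rho (snd q) (Cadd z (0,t)))).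
Proof. intros Hx t Ht. rewrite Hpsi, yof_eq; auto. simpl; lra. Qed.

Ltac HDz H := repeat first [ apply HD_const | apply HD_lineR | apply HD_lineI | apply HD_pairR | apply HD_pairI
  | apply (HD_Cln2R _ (Ux _ _ H)) | apply (HD_Cln2I _ (Ux _ _ H))
  | apply HD_add | apply HD_sub | apply HD_opp | apply HD_mul | apply HD_conj
  | apply (HD_LzR _ _ H) | apply (HD_LzI _ _ H)
  | apply (CD_lineR _ _ _ (Hb _ _ H)) | apply (CD_lineI _ _ _ (Hb _ _ H))
  | apply (proj1 (PartDiff_lines _ _ (proj1 (HG _ _ H))))
  | apply (proj2 (PartDiff_lines _ _ (proj1 (HG _ _ H))))
  | apply HD_RtoC; first [apply (R3 _ _ (Ux _ _ H)) | apply (R4 _ _ (Ux _ _ H))] ].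

Lemma dz_first q z : U q z -> Diff_z psi q z /\ dz psi q z = Ez q z.
Proof.
  intros H. pose proof (Ux q z H) as Hx.
  edestruct (Wd_of (psi q) z) as [PD [E Eb]].
  { eapply HD_loc; [exact Hx| intros t Ht; symmetry; apply (psi_z q z (fst z) Hx (Rle_refl _) t Ht)|]. unfold Bf. HDz H. }
  { eapply (HD_loc _ _ _ 1); [lra| intros t Ht; symmetry; apply (psi_zI q z Hx t Ht)|]. unfold Bf. HDz H. }
  split; [exact PD|]. unfold dz. rewrite E. Time cx_field H.
Qed.

Lemma HD_lnzR z : 0 < fst z ->
  HasDer0 (fun t => RtoC (ln (fst (Cadd z (t,0)) + fst (Cadd z (t,0))))) (RtoC (/ fst z)).
Proof. intros Hx. apply HD_RtoC. simpl. eapply dpl_eq. apply dpl_ln; [dpl|]. lra. cbv beta. field. lra. Qed.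
Lemma HD_lnzI z : HasDer0 (fun t => RtoC (ln (fst (Cadd z (0,t)) + fst (Cadd z (0,t))))) (0,0).
Proof. apply (HD_loc (fun _ => RtoC (ln (fst z + fst z))) _ _ 1); [lra| |apply HD_const].
  intros t _; simpl; rewrite Rplus_0_r; auto. Qed.
Lemma HD_divzR c z : 0 < fst z ->
  HasDer0 (fun t => RtoC (c / fst (Cadd z (t,0)))) (RtoC (- c / (fst z * fst z))).
Proof. intros Hx. apply HD_RtoC. simpl. eapply dpl_eq. apply dpl_div; [dpl|dpl|]. cbv beta; lra. cbv beta. field. lra. Qed.
Lemma HD_divzI c z : HasDer0 (fun t => RtoC (c / fst (Cadd z (0,t)))) (0,0).
Proof. apply (HD_loc (fun _ => RtoC (c / fst z)) _ _ 1); [lra| |apply HD_const].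
  intros t _; simpl; rewrite Rplus_0_r; auto. Qed.

Ltac HD2 H := repeat first [ apply HD_const
  | apply (proj1 (PartDiff_lines _ _ (proj1 (proj2 (HG _ _ H)))))
  | apply (proj2 (PartDiff_lines _ _ (proj1 (proj2 (HG _ _ H)))))
  | apply HD_lineR | apply HD_lineI | apply HD_pairR | apply HD_pairI
  | apply (HD_lnzR _ (Ux _ _ H)) | apply HD_lnzI | apply (HD_divzR _ _ (Ux _ _ H)) | apply HD_divzI
  | apply HD_add | apply HD_sub | apply HD_opp | apply HD_mul | apply HD_conj
  | apply (HD_LqR _ _ H) | apply (HD_LqI _ _ H) | apply (HD_LzR _ _ H) | apply (HD_LzI _ _ H)
  | apply (HD_RqR (fun y => rhoy y _))
  | apply (HD_RqI (fun y => rhoy y _)); apply R2; apply Ux with (1 := H)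
  | apply HD_RtoC; first [apply (R5 _ _ (Ux _ _ H)) | apply (R6 _ _ (Ux _ _ H))
       | apply (R7a _ _ (Ux _ _ H)) | apply (R7b _ _ (Ux _ _ H)) | apply (R7c _ _ (Ux _ _ H)) | apply (R7d _ _ (Ux _ _ H))] ].

Lemma dq_second q z : U q z ->
  Diff_q (dq psi) q z /\ Diff_z (dq psi) q z /\ Diff_q (dqb psi) q z /\ Diff_z (dqb psi) q z /\ dq (dq psi) q z = qq q z /\ dqb (dq psi) q z = qqb q z /\ dqb (dqb psi) q z = qbqb q z /\ dzb (dq psi) q z = qzb q z /\ dz (dqb psi) q z = qbz q z.
Proof.
  intros H. pose proof (Ux q z H) as Hx. destruct (U_near q z H) as [d [Hd Hn]].
  edestruct (Wd_of (fun w => dq psi w z) q) as [PD1 [E1q E1qb]].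
  { eapply (HD_loc _ _ _ d); [exact Hd| intros t Ht; symmetry; apply (proj1 (proj2 (dq_first _ _ (proj1 (Hn t Ht)))))|].
    unfold E1. HD2 H. }
  { eapply (HD_loc _ _ _ d); [exact Hd| intros t Ht; symmetry; apply (proj1 (proj2 (dq_first _ _ (proj1 (proj2 (Hn t Ht))))))|].
    unfold E1. HD2 H. }
  edestruct (Wd_of (fun w => dqb psi w z) q) as [PD2 [E2q E2qb]].
  { eapply (HD_loc _ _ _ d); [exact Hd| intros t Ht; symmetry; apply (proj2 (proj2 (dq_first _ _ (proj1 (Hn t Ht)))))|].
    unfold E1b. HD2 H. }
  { eapply (HD_loc _ _ _ d); [exact Hd| intros t Ht; symmetry; apply (proj2 (proj2 (dq_first _ _ (proj1 (proj2 (Hn t Ht))))))|].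
    unfold E1b. HD2 H. }
  edestruct (Wd_of (dq psi q) z) as [PD3 [E3z E3zb]].
  { eapply (HD_loc _ _ _ d); [exact Hd| intros t Ht; symmetry; apply (proj1 (proj2 (dq_first _ _ (proj1 (proj2 (proj2 (Hn t Ht)))))))|].
    unfold E1. HD2 H. }
  { eapply (HD_loc _ _ _ d); [exact Hd| intros t Ht; symmetry; apply (proj1 (proj2 (dq_first _ _ (proj2 (proj2 (proj2 (Hn t Ht)))))))|].
    unfold E1. HD2 H. }
  edestruct (Wd_of (dqb psi q) z) as [PD4 [E4z E4zb]].
  { eapply (HD_loc _ _ _ d); [exact Hd| intros t Ht; symmetry; apply (proj2 (proj2 (dq_first _ _ (proj1 (proj2 (proj2 (Hn t Ht)))))))|].
    unfold E1b. HD2 H. }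
  { eapply (HD_loc _ _ _ d); [exact Hd| intros t Ht; symmetry; apply (proj2 (proj2 (dq_first _ _ (proj2 (proj2 (proj2 (Hn t Ht)))))))|].
    unfold E1b. HD2 H. }
  unfold Diff_q, Diff_z, dq, dqb, dz, dzb in *.
  do 4 (split; [assumption|]).
  rewrite E1q, E1qb, E2qb, E3zb, E4z.
  repeat split; cx_field H.
Qed.

Lemma dz_second q z : U q z -> Diff_z (dz psi) q z /\ dzb (dz psi) q z = zzb q z.
Proof.
  intros H. pose proof (Ux q z H) as Hx. destruct (U_near q z H) as [d [Hd Hn]].
  destruct (Hb' q z H) as [l2 Hl2].
  edestruct (Wd_of (dz psi q) z) as [PD [Ez1 Ez2]].
  { eapply (HD_loc _ _ _ d); [exact Hd| intros t Ht; symmetry; apply (proj2 (dz_first _ _ (proj1 (proj2 (proj2 (Hn t Ht))))))|].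
    unfold Ez. HD2 H; apply (CD_lineR _ _ _ Hl2). }
  { eapply (HD_loc _ _ _ d); [exact Hd| intros t Ht; symmetry; apply (proj2 (dz_first _ _ (proj2 (proj2 (proj2 (Hn t Ht))))))|].
    unfold Ez. HD2 H; apply (CD_lineI _ _ _ Hl2). }
  unfold Diff_z, dzb in *. split; [assumption|]. rewrite Ez2. unfold zzb, Wdb. set (WG := Wd (fun w => RtoC (G w))). clearbody WG. cx_field H.
Qed.

Lemma Cexp_E q z : U q z ->
  Cexp (Cadd (E1 q z) (E1b q z)) =
  RtoC (((fst q + fst (b z)) ^ 2 + (snd q + snd (b z)) ^ 2) / ((fst z + fst z) * (fst z + fst z))).
Proof.
  intros H. pose proof (Ux q z H) as Hx. pose proof (HLexp q z H) as HE.
  assert (HD : (fst q + fst (b z)) ^ 2 + (snd q + snd (b z)) ^ 2 = exp (fst (L q z)) * exp (fst (L q z))).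
  { replace (fst q + fst (b z)) with (fst (Cadd q (b z))) by reflexivity.
    replace (snd q + snd (b z)) with (snd (Cadd q (b z))) by reflexivity.
    rewrite <- HE. unfold Cexp; simpl. pose proof (sin2_cos2 (snd (L q z))) as S. unfold Rsqr in S.
    transitivity (exp (fst (L q z)) * exp (fst (L q z)) *
       (sin (snd (L q z)) * sin (snd (L q z)) + cos (snd (L q z)) * cos (snd (L q z)))); [ring|].
    rewrite S; ring. }
  rewrite HD. unfold E1, E1b, Cexp, Csub, Cadd, Copp, Cmul, Cconj, RtoC, Ci; cbn [fst snd].
  f_equal.
  - match goal with |- exp ?A * cos ?B = _ => replace B with 0 by ring;
      replace A with (fst (L q z) + fst (L q z) + - ln (fst z + fst z) + - ln (fst z + fst z)) by ring end.
    rewrite cos_0, !exp_plus, !exp_Ropp, exp_ln by lra. field. repeat split; try lra; apply Rgt_not_eq, exp_pos.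
  - match goal with |- exp ?A * sin ?B = _ => replace B with 0 by ring end. rewrite sin_0. ring.
Qed.

Theorem master : IsSolution U psi.
Proof.
  intros q z H. pose proof (Ux q z H) as Hx.
  destruct (dq_first q z H) as [D1 [V1 V1b]].
  destruct (dz_first q z H) as [D2 V2].
  destruct (dq_second q z H) as [D3 [D4 [D5 [D6 [W1 [W2 [W3 [W4 W5]]]]]]]].
  destruct (dz_second q z H) as [D7 W6].
  do 7 (split; [assumption|]).
  rewrite V1, V1b, W1, W2, W3, W4, W5, W6, Cexp_E by auto.
  destruct (R8 (snd q) z Hx) as [R8a R8b].
  pose proof (R9 (snd q) z Hx) as R9'.
  assert (Z : zzb q z = RtoC ((fst q + fst (b z)) / (2 * fst z * fst z))).
  { unfold zzb. rewrite (proj2 (proj2 (HG q z H))), R8a, R8b.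
    unfold Cdiv, Cinv, Cadd, Cmul, Cconj, RtoC; cbn [fst snd]. f_equal; field; repeat split; try lra; replace (snd z + - snd z) with 0 by ring; apply Rgt_not_eq; ring_simplify; pose proof (pow_lt (fst z) 4 Hx); lra. }
  assert (Z2 : Cmul (qzb q z) (qbz q z) = RtoC (/ (4 * fst z * fst z))).
  { unfold qzb, qbz, Cmul, RtoC; cbn [fst snd]. f_equal; [|field; lra].
    transitivity (((rhoyv (snd q) z / 2 - / fst z) / 2) * ((rhoyv (snd q) z / 2 - / fst z) / 2)
       + rhoyx (snd q) z * rhoyx (snd q) z / 16); [field; lra|].
    replace (rhoyx (snd q) z * rhoyx (snd q) z) with (4 * rhoyv (snd q) z / fst z - rhoyv (snd q) z * rhoyv (snd q) z) by lra.
    field. lra. }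
  pose proof (Qnz2 q z H) as HQ.
  assert (Z3 : Csub (Cmul (qqb q z) (qqb q z)) (Cmul (qq q z) (qbqb q z)) =
     RtoC ((-1 + 2 * (rhoyy (snd q) z / 4) * (fst q + fst (b z))) / ((fst q + fst (b z)) ^ 2 + (snd q + snd (b z)) ^ 2))).
  { unfold qq, qqb, qbqb, Csub, Cdiv, Cinv, Cadd, Copp, Cmul, Cconj, RtoC; cbn [fst snd]. f_equal; field; auto. }
  rewrite Z, Z2, Z3. unfold qqb, Csub, Cadd, Copp, Cmul, RtoC; cbn [fst snd]. f_equal; field; split; lra || auto.
Qed.

End Master.

Ltac dsolve := eapply dpl_eq; [ dpl | ]; cbv beta in *; [ .. | try (field; repeat split; nra) ].

Section Rho2.
Variables (r r1 r2 : R -> R).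
Hypothesis Hr1 : forall y, derivable_pt_lim r y (r1 y).
Hypothesis Hr2 : forall y, derivable_pt_lim r1 y (r2 y).

Definition rho2 (y : R) (z : Cx) := r y + 4 * y * atan (snd z / fst z).
Definition rho2y (y : R) (z : Cx) := r1 y + 4 * atan (snd z / fst z).
Definition rho2yy (y : R) (z : Cx) := r2 y.
Definition D2 (z : Cx) := fst z * fst z + snd z * snd z.
Definition rho2x (y : R) (z : Cx) := 4 * y * (- snd z / D2 z).
Definition rho2v (y : R) (z : Cx) := 4 * y * (fst z / D2 z).
Definition rho2yx (y : R) (z : Cx) := 4 * (- snd z / D2 z).
Definition rho2yv (y : R) (z : Cx) := 4 * (fst z / D2 z).
Definition rho2xx (y : R) (z : Cx) := 4 * y * (2 * fst z * snd z / (D2 z * D2 z)).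
Definition rho2xv (y : R) (z : Cx) := 4 * y * ((snd z * snd z - fst z * fst z) / (D2 z * D2 z)).
Definition rho2vv (y : R) (z : Cx) := 4 * y * (- 2 * fst z * snd z / (D2 z * D2 z)).

Lemma rho2_R1 y z : 0 < fst z -> derivable_pt_lim (fun t => rho2 t z) y (rho2y y z).
Proof. intros Hx. unfold rho2, rho2y. eapply dpl_eq. apply dpl_plus. apply Hr1.
  apply dpl_mult; [apply dpl_mult; [apply dpl_const|apply dpl_id]|apply dpl_const]. cbv beta. ring. Qed.
Lemma rho2_R2 y z : 0 < fst z -> derivable_pt_lim (fun t => rho2y t z) y (rho2yy y z).
Proof. intros Hx. unfold rho2y, rho2yy. eapply dpl_eq. apply dpl_plus. apply Hr2. apply dpl_const. ring. Qed.

Ltac zsolve := intros y [x v] Hx; simpl in Hx;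
  unfold rho2, rho2y, rho2x, rho2v, rho2yx, rho2yv, rho2xx, rho2xv, rho2vv, D2; simpl;
  eapply dpl_eq; [ dpl | .. ]; cbv beta; try lra; try (apply Rgt_not_eq; nra); try (field; repeat split; apply Rgt_not_eq; nra).

Lemma rho2_R3 : forall y z, 0 < fst z -> derivable_pt_lim (fun t => rho2 y (Cadd z (t,0))) 0 (rho2x y z).
Proof. zsolve. Qed.
Lemma rho2_R4 : forall y z, 0 < fst z -> derivable_pt_lim (fun t => rho2 y (Cadd z (0,t))) 0 (rho2v y z).
Proof. zsolve. Qed.
Lemma rho2_R5 : forall y z, 0 < fst z -> derivable_pt_lim (fun t => rho2y y (Cadd z (t,0))) 0 (rho2yx y z).
Proof. zsolve. Qed.
Lemma rho2_R6 : forall y z, 0 < fst z -> derivable_pt_lim (fun t => rho2y y (Cadd z (0,t))) 0 (rho2yv y z).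
Proof. zsolve. Qed.
Lemma rho2_R7a : forall y z, 0 < fst z -> derivable_pt_lim (fun t => rho2x y (Cadd z (t,0))) 0 (rho2xx y z).
Proof. zsolve. Qed.
Lemma rho2_R7b : forall y z, 0 < fst z -> derivable_pt_lim (fun t => rho2x y (Cadd z (0,t))) 0 (rho2xv y z).
Proof. zsolve. Qed.
Lemma rho2_R7c : forall y z, 0 < fst z -> derivable_pt_lim (fun t => rho2v y (Cadd z (t,0))) 0 (rho2xv y z).
Proof. zsolve. Qed.
Lemma rho2_R7d : forall y z, 0 < fst z -> derivable_pt_lim (fun t => rho2v y (Cadd z (0,t))) 0 (rho2vv y z).
Proof. zsolve. Qed.
Lemma rho2_R8 : forall y z, 0 < fst z -> rho2xx y z + rho2vv y z = 0 /\ rho2xv y z = rho2xv y z.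
Proof. intros y [x v] Hx; simpl in Hx. unfold rho2xx, rho2vv, D2; simpl. split; [field|]; auto; nra. Qed.
Lemma rho2_R9 : forall y z, 0 < fst z ->
  rho2yv y z * rho2yv y z + rho2yx y z * rho2yx y z = 4 * rho2yv y z / fst z.
Proof. intros y [x v] Hx; simpl in Hx. unfold rho2yv, rho2yx, D2; simpl. field. split; nra. Qed.
End Rho2.

Lemma prim_ex (g : R -> R) a b c : a <= c <= b ->
  (forall t, a <= t <= b -> continuity_pt g t) ->
  exists H, H c = 0 /\ forall t, a <= t <= b -> derivable_pt_lim H t (g t).
Proof.
  intros Hc Hg. assert (h : a <= b) by lra.
  set (P := primitive h (FTC_P1 h Hg)).
  exists (fun t => P t - P c). split; [ring|].
  intros t Ht. eapply dpl_eq. apply dpl_minus; [apply RiemannInt_P28; exact Ht| apply dpl_const]. ring.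
Qed.

Definition PrimF (y0 : R) (g : R -> R) (Y : R) : R -> R :=
  epsilon (inhabits (fun _ => 0)) (fun H => H y0 = 0 /\
    forall t, Rmin y0 Y <= t <= Rmax y0 Y -> derivable_pt_lim H t (g t)).

Lemma PrimF_spec y0 g Y :
  (forall t, Rmin y0 Y <= t <= Rmax y0 Y -> continuity_pt g t) ->
  PrimF y0 g Y y0 = 0 /\ forall t, Rmin y0 Y <= t <= Rmax y0 Y -> derivable_pt_lim (PrimF y0 g Y) t (g t).
Proof.
  intros Hg. unfold PrimF. apply epsilon_spec.
  apply prim_ex; auto. split; [apply Rmin_l|apply Rmax_l].
Qed.

Lemma between_abs s0 s c : Rmin s0 s <= c <= Rmax s0 s -> Rabs (c - s0) <= Rabs (s - s0).
Proof. unfold Rmin, Rmax, Rabs; intros; repeat destruct (Rcase_abs _); repeat destruct (Rle_dec _ _); lra. Qed.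

Lemma sq_abs a : Rabs a * Rabs a = a * a.
Proof. rewrite <- Rabs_mult. apply Rabs_right. apply Rle_ge. pose proof (Rle_0_sqr a). unfold Rsqr in *. lra. Qed.

Lemma taylor2 (g g1 g2 : R -> R) s0 d C : 0 < d ->
  (forall s, Rabs (s - s0) < d -> derivable_pt_lim g s (g1 s)) ->
  (forall s, Rabs (s - s0) < d -> derivable_pt_lim g1 s (g2 s)) ->
  (forall s, Rabs (s - s0) < d -> Rabs (g2 s) <= C) ->
  forall s, Rabs (s - s0) < d -> Rabs (g s - g s0 - (s - s0) * g1 s0) <= C * ((s - s0) * (s - s0)).
Proof.
  intros Hd H1 H2 HC s Hs.
  assert (Hin : forall c, Rmin s0 s <= c <= Rmax s0 s -> Rabs (c - s0) <= Rabs (s - s0)) by (intros; apply between_abs; auto).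
  assert (Hin2 : forall c, Rmin s0 s <= c <= Rmax s0 s -> Rabs (c - s0) < d).
  { intros c Hc; eapply Rle_lt_trans; [apply Hin; auto| auto]. }
  destruct (MVT_abs (fun σ => g σ - g s0 - (σ - s0) * g1 s0) (fun σ => g1 σ - g1 s0) s0 s) as [c [Ec Hc]].
  { intros c Hc. eapply dpl_eq. apply dpl_minus; [apply dpl_minus; [apply H1; auto| apply dpl_const]|].
    apply dpl_mult; [apply dpl_minus; [apply dpl_id|apply dpl_const]|apply dpl_const]. cbv beta. ring. }
  cbv beta in Ec. replace (g s0 - g s0 - (s0 - s0) * g1 s0) with 0 in Ec by ring.
  rewrite Rminus_0_r in Ec. rewrite Ec.
  destruct (MVT_abs g1 g2 s0 c) as [c2 [Ec2 Hc2]].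
  { intros c' Hc'. apply H2. apply Rle_lt_trans with (Rabs (c - s0)); auto. apply between_abs; auto. }
  rewrite Ec2.
  assert (HC2 : Rabs (g2 c2) <= C).
  { apply HC. apply Rle_lt_trans with (Rabs (c - s0)); auto. apply between_abs; auto. }
  pose proof (Hin c Hc). pose proof (Rabs_pos (c - s0)). pose proof (Rabs_pos (g2 c2)).
  pose proof (Rabs_pos (s - s0)).
  rewrite <- (sq_abs (s - s0)).
  apply Rle_trans with (C * Rabs (c - s0) * Rabs (s - s0)).
  2:{ rewrite <- Rmult_assoc. apply Rmult_le_compat_r; auto. apply Rmult_le_compat_l; lra. }
  apply Rmult_le_compat_r; auto. apply Rmult_le_compat_r; auto.
Qed.

Lemma DUI (F f : R -> R -> R) (Hh g : R -> R) (y0 Y s0 d C : R) :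
  0 < d -> 0 <= C ->
  (forall s, Rabs (s - s0) < d -> forall t, Rmin y0 Y <= t <= Rmax y0 Y ->
      derivable_pt_lim (fun t => F t s) t (f t s)) ->
  (forall s, Rabs (s - s0) < d -> F y0 s = 0) ->
  (forall t, Rmin y0 Y <= t <= Rmax y0 Y -> derivable_pt_lim Hh t (g t)) -> Hh y0 = 0 ->
  (forall s t, Rabs (s - s0) < d -> Rmin y0 Y <= t <= Rmax y0 Y ->
      Rabs (f t s - f t s0 - (s - s0) * g t) <= C * ((s - s0) * (s - s0))) ->
  derivable_pt_lim (fun s => F Y s) s0 (Hh Y).
Proof.
  intros Hd HC HF HF0 HH HH0 Hb eps Heps.
  set (A := C * Rabs (Y - y0) + 1).
  assert (HA : 0 < A) by (unfold A; pose proof (Rabs_pos (Y - y0)); nra).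
  assert (Hdel : 0 < Rmin d (eps / A)) by (apply Rmin_pos; auto; apply Rdiv_lt_0_compat; auto).
  exists (mkposreal _ Hdel). intros h Hh0 Hhd. simpl in Hhd.
  assert (Hh1 : Rabs h < d) by (eapply Rlt_le_trans; [exact Hhd|apply Rmin_l]).
  assert (Hh2 : Rabs h < eps / A) by (eapply Rlt_le_trans; [exact Hhd|apply Rmin_r]).
  assert (Hs : Rabs (s0 + h - s0) < d) by (replace (s0 + h - s0) with h by ring; auto).
  assert (Hs0 : Rabs (s0 - s0) < d) by (rewrite Rminus_diag, Rabs_R0; auto).
  destruct (MVT_abs (fun t => F t (s0 + h) - F t s0 - h * Hh t)
                    (fun t => f t (s0 + h) - f t s0 - h * g t) y0 Y) as [c [Ec Hc]].
  { intros t Ht. eapply dpl_eq.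
    apply dpl_minus; [apply dpl_minus; [apply (HF _ Hs); auto| apply (HF _ Hs0); auto]|].
    apply dpl_mult; [apply dpl_const| apply HH; auto]. cbv beta. ring. }
  cbv beta in Ec. rewrite HF0, HF0, HH0 in Ec by auto.
  replace (0 - 0 - h * 0) with 0 in Ec by ring. rewrite Rminus_0_r in Ec.
  pose proof (Hb (s0 + h) c Hs Hc) as Hbc. replace (s0 + h - s0) with h in Hbc by ring.
  replace ((F Y (s0 + h) - F Y s0) / h - Hh Y) with ((F Y (s0 + h) - F Y s0 - h * Hh Y) / h) by (field; auto).
  unfold Rdiv. rewrite Rabs_mult, Ec, Rabs_Rinv by auto.
  assert (Hp : 0 < Rabs h) by (apply Rabs_pos_lt; auto).
  apply Rle_lt_trans with (C * (h * h) * Rabs (Y - y0) * / Rabs h).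
  { apply Rmult_le_compat_r; [left; apply Rinv_0_lt_compat; auto|].
    apply Rmult_le_compat_r; [apply Rabs_pos|]. auto. }
  rewrite <- (sq_abs h).
  replace (C * (Rabs h * Rabs h) * Rabs (Y - y0) * / Rabs h) with (C * Rabs (Y - y0) * Rabs h) by (field; lra).
  apply Rle_lt_trans with (A * Rabs h). { unfold A. pose proof (Rabs_pos (Y - y0)). nra. }
  apply Rmult_lt_reg_l with (/ A). { apply Rinv_0_lt_compat; auto. }
  replace (/ A * (A * Rabs h)) with (Rabs h) by (field; lra).
  replace (/ A * eps) with (eps / A) by (unfold Rdiv; ring). auto.
Qed.

Definition DD (x u : R) := x * x + u * u.
Definition P0 x u := -2 * atan (u / x).
Definition Px x u := 2 * u / DD x u.
Definition Pu x u := -2 * x / DD x u.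
Definition Pxx x u := -4 * x * u / (DD x u * DD x u).
Definition Pxu x u := 2 * (x * x - u * u) / (DD x u * DD x u).
Definition Puu x u := 4 * x * u / (DD x u * DD x u).
Definition Pxxx x u := (12 * x * x * u - 4 * u * u * u) / (DD x u * DD x u * DD x u).
Definition Pxuu x u := (4 * u * u * u - 12 * u * x * x) / (DD x u * DD x u * DD x u).
Definition Pxxu x u := (12 * x * u * u - 4 * x * x * x) / (DD x u * DD x u * DD x u).
Definition Puuu x u := (4 * x * x * x - 12 * x * u * u) / (DD x u * DD x u * DD x u).

Ltac psolve := intros x u Hx; unfold P0, Px, Pu, Pxx, Pxu, Puu, Pxxx, Pxuu, Pxxu, Puuu, DD;
  eapply dpl_eq; [ dpl | .. ]; cbv beta; try (apply Rgt_not_eq; repeat apply Rmult_lt_0_compat; nra); try (field; repeat split; apply Rgt_not_eq; repeat apply Rmult_lt_0_compat; nra).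

Lemma d_x0 : forall x u, 0 < x -> derivable_pt_lim (fun s => P0 s u) x (Px x u). Proof. psolve. Qed.
Lemma d_u0 : forall x u, 0 < x -> derivable_pt_lim (fun w => P0 x w) u (Pu x u). Proof. psolve. Qed.
Lemma d_xx : forall x u, 0 < x -> derivable_pt_lim (fun s => Px s u) x (Pxx x u). Proof. psolve. Qed.
Lemma d_xu : forall x u, 0 < x -> derivable_pt_lim (fun w => Px x w) u (Pxu x u). Proof. psolve. Qed.
Lemma d_ux : forall x u, 0 < x -> derivable_pt_lim (fun s => Pu s u) x (Pxu x u). Proof. psolve. Qed.
Lemma d_uu : forall x u, 0 < x -> derivable_pt_lim (fun w => Pu x w) u (Puu x u). Proof. psolve. Qed.
Lemma d_xxx : forall x u, 0 < x -> derivable_pt_lim (fun s => Pxx s u) x (Pxxx x u). Proof. psolve. Qed.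
Lemma d_xuu : forall x u, 0 < x -> derivable_pt_lim (fun w => Pxu x w) u (Pxuu x u). Proof. psolve. Qed.
Lemma d_xxu : forall x u, 0 < x -> derivable_pt_lim (fun s => Pxu s u) x (Pxxu x u). Proof. psolve. Qed.
Lemma d_uuu : forall x u, 0 < x -> derivable_pt_lim (fun w => Puu x w) u (Puuu x u). Proof. psolve. Qed.
Lemma d_xxu' : forall x u, 0 < x -> derivable_pt_lim (fun w => Pxx x w) u (Pxxu x u). Proof. psolve. Qed.

Lemma harm x u : 0 < x -> Pxx x u + Puu x u = 0.
Proof. intros Hx. unfold Pxx, Puu, DD. field. apply Rgt_not_eq; nra. Qed.

Lemma bound2 x u m : 0 < m <= x -> Rabs (4 * x * u / (DD x u * DD x u)) <= 2 / (m * m).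
Proof.
  intros Hm. unfold DD. assert (HD : m * m <= x * x + u * u) by nra.
  assert (HD0 : 0 < x * x + u * u) by nra.
  unfold Rdiv. rewrite Rabs_mult, Rabs_Rinv by (apply Rgt_not_eq; repeat apply Rmult_lt_0_compat; auto).
  rewrite (Rabs_right ((x * x + u * u) * (x * x + u * u))) by (apply Rle_ge; left; apply Rmult_lt_0_compat; auto).
  assert (A : Rabs (4 * x * u) <= 2 * (x * x + u * u)).
  { pose proof (Rle_0_sqr (x - u)); pose proof (Rle_0_sqr (x + u)); unfold Rsqr in *. apply Rabs_le. split; nra. }
  apply Rle_trans with (2 * (x * x + u * u) * / ((x * x + u * u) * (x * x + u * u))).
  { apply Rmult_le_compat_r; auto. left; apply Rinv_0_lt_compat; nra. }
  replace (2 * (x * x + u * u) * / ((x * x + u * u) * (x * x + u * u))) with (2 / (x * x + u * u)) by (field; lra).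
  unfold Rdiv. apply Rmult_le_compat_l; [lra|]. apply Rinv_le_contravar; nra.
Qed.

Lemma poly3 a c : (4 * a * (3 * c * c - a * a)) * (4 * a * (3 * c * c - a * a)) <=
  144 * ((a * a + c * c) * (a * a + c * c) * (a * a + c * c)).
Proof.
  assert (H1 : (3 * c * c - a * a) * (3 * c * c - a * a) <= 9 * ((a * a + c * c) * (a * a + c * c))) by nra.
  assert (H2 : 0 <= a * a) by nra.
  assert (H3 : a * a <= a * a + c * c) by nra.
  assert (H4 : 0 <= (a * a + c * c) * (a * a + c * c)) by nra.
  replace ((4 * a * (3 * c * c - a * a)) * (4 * a * (3 * c * c - a * a)))
    with (16 * (a * a) * ((3 * c * c - a * a) * (3 * c * c - a * a))) by ring.
  apply Rle_trans with (16 * (a * a) * (9 * ((a * a + c * c) * (a * a + c * c)))).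
  { apply Rmult_le_compat_l; nra. }
  nra.
Qed.

Ltac posR := repeat (apply Rmult_lt_0_compat || apply Rinv_0_lt_compat); lra.

Lemma bound3 x u m N : 0 < m <= x -> N * N <= 144 * (DD x u * DD x u * DD x u) ->
  Rabs (N / (DD x u * DD x u * DD x u)) <= 12 / (m * m * m).
Proof.
  intros Hm HN. unfold DD in *. set (D := x * x + u * u) in *.
  assert (HD : m * m <= D) by (unfold D; nra).
  assert (HD0 : 0 < D) by nra.
  assert (HM : 0 <= m * m) by nra.
  assert (HD2 : (m * m) * (m * m) <= D * D) by (apply Rmult_le_compat; auto).
  assert (HD3 : m * m * m * (m * m * m) <= D * D * D).
  { replace (m * m * m * (m * m * m)) with ((m * m) * (m * m) * (m * m)) by ring.
    apply Rmult_le_compat; auto. apply Rmult_le_pos; auto. }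
  unfold Rdiv. rewrite Rabs_mult, Rabs_Rinv by (apply Rgt_not_eq; repeat apply Rmult_lt_0_compat; auto).
  rewrite (Rabs_right (D * D * D)) by (apply Rle_ge; left; repeat apply Rmult_lt_0_compat; auto).
  assert (A : Rabs N <= 12 * (D * D * D) / (m * m * m)).
  { apply Rsqr_le_abs_0 in HN || idtac.
    rewrite <- (Rabs_right (12 * (D * D * D) / (m * m * m))) by (apply Rle_ge; unfold Rdiv; apply Rmult_le_pos; [left; apply Rmult_lt_0_compat; [lra| repeat apply Rmult_lt_0_compat; auto]|left; apply Rinv_0_lt_compat; repeat apply Rmult_lt_0_compat; lra]).
    apply Rsqr_le_abs_0. unfold Rsqr.
    apply Rle_trans with (144 * (D * D * D)); auto.
    replace (12 * (D * D * D) / (m * m * m) * (12 * (D * D * D) / (m * m * m)))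
      with (144 * (D * D * D) * ((D * D * D) / (m * m * m * (m * m * m)))) by (field; repeat split; apply Rgt_not_eq; posR).
    rewrite <- (Rmult_1_r (144 * (D * D * D))) at 1.
    apply Rmult_le_compat_l; [left; posR|].
    apply (Rmult_le_reg_r (m * m * m * (m * m * m))); [posR|].
    unfold Rdiv. rewrite Rmult_1_l. replace (D * D * D * / (m * m * m * (m * m * m)) * (m * m * m * (m * m * m))) with (D * D * D) by (field; apply Rgt_not_eq; posR). auto. }
  apply Rle_trans with (12 * (D * D * D) / (m * m * m) * / (D * D * D)).
  { apply Rmult_le_compat_r; auto. left; posR. }
  right. field. repeat split; apply Rgt_not_eq; posR.
Qed.

Lemma b_xx x u m : 0 < m <= x -> Rabs (Pxx x u) <= 2 / (m * m).
Proof. intros. unfold Pxx. replace (-4 * x * u / (DD x u * DD x u)) with (- (4 * x * u / (DD x u * DD x u))) by (unfold Rdiv; ring).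
  rewrite Rabs_Ropp. apply bound2; auto. Qed.
Lemma b_uu x u m : 0 < m <= x -> Rabs (Puu x u) <= 2 / (m * m).
Proof. intros. apply bound2; auto. Qed.
Lemma b_xxx x u m : 0 < m <= x -> Rabs (Pxxx x u) <= 12 / (m * m * m).
Proof. intros. apply bound3; auto. unfold DD. pose proof (poly3 u x). nra. Qed.
Lemma b_xuu x u m : 0 < m <= x -> Rabs (Pxuu x u) <= 12 / (m * m * m).
Proof. intros. apply bound3; auto. unfold DD. pose proof (poly3 u x). nra. Qed.
Lemma b_xxu x u m : 0 < m <= x -> Rabs (Pxxu x u) <= 12 / (m * m * m).
Proof. intros. apply bound3; auto. unfold DD. pose proof (poly3 x u). nra. Qed.
Lemma b_uuu x u m : 0 < m <= x -> Rabs (Puuu x u) <= 12 / (m * m * m).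
Proof. intros. apply bound3; auto. unfold DD. pose proof (poly3 x u). nra. Qed.

Section DUIs.
Variables (k k1 : R -> R) (y0 : R).
Hypothesis Hkd : forall t, derivable_pt_lim k t (k1 t).

Lemma cont_comp_k (A : R -> R) v t :
  (forall w, exists l, derivable_pt_lim A w l) -> continuity_pt (fun t => A (v - 2 * k t)) t.
Proof.
  intros HA. destruct (HA (v - 2 * k t)) as [l Hl].
  apply derivable_continuous_pt. exists (l * (0 - (0 * k t + 2 * k1 t))).
  apply (dpl_comp (fun t => v - 2 * k t) A). { apply dpl_minus; [apply dpl_const|].
  apply dpl_mult; [apply dpl_const|apply Hkd]. } exact Hl.
Qed.

Lemma PrimF_k (A : R -> R) v Y :
  (forall w, exists l, derivable_pt_lim A w l) ->
  PrimF y0 (fun t => A (v - 2 * k t)) Y y0 = 0 /\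
  forall t, Rmin y0 Y <= t <= Rmax y0 Y ->
    derivable_pt_lim (PrimF y0 (fun t => A (v - 2 * k t)) Y) t (A (v - 2 * k t)).
Proof. intros HA. apply PrimF_spec. intros t _. apply cont_comp_k; auto. Qed.

Lemma DUIx (A A1 A2 : R -> R -> R) (F : R -> R -> R) Y x v B :
  0 < x ->
  (forall s u, 0 < s -> derivable_pt_lim (fun s => A s u) s (A1 s u)) ->
  (forall s u, 0 < s -> derivable_pt_lim (fun s => A1 s u) s (A2 s u)) ->
  (forall s u, x / 2 <= s -> Rabs (A2 s u) <= B) ->
  (forall w, exists l, derivable_pt_lim (fun u => A1 x u) w l) ->
  (forall s, Rabs (s - x) < x / 2 -> forall t, Rmin y0 Y <= t <= Rmax y0 Y ->
     derivable_pt_lim (fun t => F t s) t (A s (v - 2 * k t))) ->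
  (forall s, Rabs (s - x) < x / 2 -> F y0 s = 0) ->
  derivable_pt_lim (fun s => F Y s) x (PrimF y0 (fun t => A1 x (v - 2 * k t)) Y Y).
Proof.
  intros Hx HA HA1 HB Hc HF HF0.
  assert (HB0 : 0 <= B) by (eapply Rle_trans; [apply Rabs_pos| apply (HB x 0); lra]).
  destruct (PrimF_k (fun u => A1 x u) v Y Hc) as [P0' P1'].
  apply (DUI F (fun t s => A s (v - 2 * k t)) _ (fun t => A1 x (v - 2 * k t)) y0 Y x (x/2) B); auto.
  - lra.
  - intros s t Hs Ht.
    assert (Hs' : forall s', Rabs (s' - x) < x / 2 -> 0 < s') by (intros s' Hs'; apply Rabs_def2 in Hs'; lra).
    apply (taylor2 (fun s => A s (v - 2 * k t)) (fun s => A1 s (v - 2 * k t)) (fun s => A2 s (v - 2 * k t)) x (x/2) B); auto.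
    + lra.
    + intros s' Hs''. apply HB. apply Rabs_def2 in Hs''; lra.
Qed.

Lemma dshift (A A1 : R -> R) c s : derivable_pt_lim A (s - c) (A1 (s - c)) ->
  derivable_pt_lim (fun s => A (s - c)) s (A1 (s - c)).
Proof. intros H. eapply dpl_eq. apply (dpl_comp (fun s => s - c) A). dpl. exact H. ring. Qed.

Lemma DUIv (A A1 A2 : R -> R -> R) (F : R -> R -> R) Y x v B :
  0 < x ->
  (forall u, derivable_pt_lim (fun w => A x w) u (A1 x u)) ->
  (forall u, derivable_pt_lim (fun w => A1 x w) u (A2 x u)) ->
  (forall u, Rabs (A2 x u) <= B) ->
  (forall s, Rabs (s - v) < 1 -> forall t, Rmin y0 Y <= t <= Rmax y0 Y ->
     derivable_pt_lim (fun t => F t s) t (A x (s - 2 * k t))) ->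
  (forall s, Rabs (s - v) < 1 -> F y0 s = 0) ->
  derivable_pt_lim (fun s => F Y s) v (PrimF y0 (fun t => A1 x (v - 2 * k t)) Y Y).
Proof.
  intros Hx HA HA1 HB HF HF0.
  assert (HB0 : 0 <= B) by (eapply Rle_trans; [apply Rabs_pos| apply (HB 0)]).
  destruct (PrimF_k (fun u => A1 x u) v Y) as [P0' P1'].
  { intros w; exists (A2 x w); auto. }
  apply (DUI F (fun t s => A x (s - 2 * k t)) _ (fun t => A1 x (v - 2 * k t)) y0 Y v 1 B); auto.
  - lra.
  - intros s t Hs Ht.
    apply (taylor2 (fun s => A x (s - 2 * k t)) (fun s => A1 x (s - 2 * k t)) (fun s => A2 x (s - 2 * k t)) v 1 B); auto.
    + lra.
    + intros s' _. apply dshift. apply HA.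
    + intros s' _. apply dshift. apply HA1.
Qed.
End DUIs.

Lemma Rabs_0_eq a : Rabs a = 0 -> a = 0.
Proof. intros H. destruct (Req_dec a 0); auto. exfalso; apply (Rabs_no_R0 a); auto. Qed.

Section Rho3.
Variables (r r1 r2 k k1 : R -> R) (y0 : R) (K : R -> Cx -> Cx).
Hypothesis Hr1 : forall y, derivable_pt_lim r y (r1 y).
Hypothesis Hr2 : forall y, derivable_pt_lim r1 y (r2 y).
Hypothesis Hkd : forall t, derivable_pt_lim k t (k1 t).
Hypothesis HK0 : forall z, 0 < Re (Cadd z (Cconj z)) -> K y0 z = (0, 0).
Hypothesis HK : forall z, 0 < Re (Cadd z (Cconj z)) -> forall y,
      let integrand :=
        Cln (Cdiv (Cadd (Cconj z) (Cmul (RtoC 2) (Cmul Ci (RtoC (k y)))))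
                  (Csub z (Cmul (RtoC 2) (Cmul Ci (RtoC (k y)))))) in
      derivable_pt_lim (fun t => fst (K t z)) y (fst integrand) /\
      derivable_pt_lim (fun t => snd (K t z)) y (snd integrand).

Lemma Re_pos x v : 0 < x -> 0 < Re (Cadd (x, v) (Cconj (x, v))).
Proof. intros; unfold Re, Cadd, Cconj; simpl; lra. Qed.

Lemma K_der x v t : 0 < x ->
  derivable_pt_lim (fun t => fst (K t (x, v))) t 0 /\
  derivable_pt_lim (fun t => snd (K t (x, v))) t (P0 x (v - 2 * k t)).
Proof.
  intros Hx. destruct (HK (x, v) (Re_pos x v Hx) t) as [A B]. cbv zeta in A, B.
  assert (E1 : Cadd (Cconj (x, v)) (Cmul (RtoC 2) (Cmul Ci (RtoC (k t)))) = (x, - (v - 2 * k t))).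
  { unfold Cadd, Cconj, Cmul, RtoC, Ci; simpl; f_equal; ring. }
  assert (E2 : Csub (x, v) (Cmul (RtoC 2) (Cmul Ci (RtoC (k t)))) = (x, v - 2 * k t)).
  { unfold Csub, Cadd, Copp, Cmul, RtoC, Ci; simpl; f_equal; ring. }
  rewrite E1, E2, Cln_ratio in A, B by auto. simpl in A, B. split; auto.
Qed.

Lemma K_fst x v t : 0 < x -> fst (K t (x, v)) = 0.
Proof.
  intros Hx. destruct (MVT_abs (fun t => fst (K t (x, v))) (fun _ => 0) y0 t) as [c [Ec _]].
  { intros c _. apply (K_der x v c Hx). }
  rewrite HK0 in Ec by (apply Re_pos; auto). simpl in Ec. rewrite Rabs_R0, Rmult_0_l in Ec.
  apply Rabs_0_eq in Ec. lra.
Qed.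

Definition rho3 (y : R) (z : Cx) := r y - 2 * snd (K y z).
Definition rho3y (y : R) (z : Cx) := r1 y - 2 * P0 (fst z) (snd z - 2 * k y).
Definition rho3yy (y : R) (z : Cx) := r2 y - 2 * (Pu (fst z) (snd z - 2 * k y) * (0 - (0 * k y + 2 * k1 y))).
Definition kx (y : R) (z : Cx) := PrimF y0 (fun t => Px (fst z) (snd z - 2 * k t)) y y.
Definition kv (y : R) (z : Cx) := PrimF y0 (fun t => Pu (fst z) (snd z - 2 * k t)) y y.
Definition kxx (y : R) (z : Cx) := PrimF y0 (fun t => Pxx (fst z) (snd z - 2 * k t)) y y.
Definition kxv (y : R) (z : Cx) := PrimF y0 (fun t => Pxu (fst z) (snd z - 2 * k t)) y y.
Definition kvv (y : R) (z : Cx) := PrimF y0 (fun t => Puu (fst z) (snd z - 2 * k t)) y y.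
Definition rho3x y z := -2 * kx y z.
Definition rho3v y z := -2 * kv y z.
Definition rho3xx y z := -2 * kxx y z.
Definition rho3xv y z := -2 * kxv y z.
Definition rho3vv y z := -2 * kvv y z.
Definition rho3yx (y : R) (z : Cx) := -2 * Px (fst z) (snd z - 2 * k y).
Definition rho3yv (y : R) (z : Cx) := -2 * Pu (fst z) (snd z - 2 * k y).

Lemma rho3_R1 y z : 0 < fst z -> derivable_pt_lim (fun t => rho3 t z) y (rho3y y z).
Proof. destruct z as [x v]; simpl; intros Hx. unfold rho3, rho3y; simpl.
  eapply dpl_eq. apply dpl_minus; [apply Hr1|]. apply dpl_mult; [apply dpl_const|].
  apply (K_der x v y Hx). cbv beta. ring. Qed.

Lemma rho3_R2 y z : 0 < fst z -> derivable_pt_lim (fun t => rho3y t z) y (rho3yy y z).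
Proof. destruct z as [x v]; simpl; intros Hx. unfold rho3y, rho3yy; simpl.
  eapply dpl_eq. apply dpl_minus; [apply Hr2|]. apply dpl_mult; [apply dpl_const|].
  apply (dpl_comp (fun t => v - 2 * k t) (fun u => P0 x u)).
  { apply dpl_minus; [apply dpl_const|]. apply dpl_mult; [apply dpl_const|apply Hkd]. }
  apply d_u0; auto. cbv beta. ring. Qed.

Lemma ext_pair (h : Cx -> R) x v l :
  derivable_pt_lim (fun s => h (s, v)) x l -> derivable_pt_lim (fun t => h (Cadd (x, v) (t, 0))) 0 l.
Proof. intros H. apply (derivable_pt_lim_ext (fun t => h (x + t, v))).
  { intros t. unfold Cadd; simpl. rewrite Rplus_0_r; auto. }
  apply (dpl_shift0 (fun s => h (s, v))); auto. Qed.
Lemma ext_pairI (h : Cx -> R) x v l :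
  derivable_pt_lim (fun s => h (x, s)) v l -> derivable_pt_lim (fun t => h (Cadd (x, v) (0, t))) 0 l.
Proof. intros H. apply (derivable_pt_lim_ext (fun t => h (x, v + t))).
  { intros t. unfold Cadd; simpl. rewrite Rplus_0_r; auto. }
  apply (dpl_shift0 (fun s => h (x, s))); auto. Qed.

Lemma dpl_m2 (h : R -> R) x l : derivable_pt_lim h x l ->
  derivable_pt_lim (fun s => -2 * h s) x (-2 * l).
Proof. intros H. eapply dpl_eq. apply dpl_mult; [apply dpl_const| exact H]. cbv beta. ring. Qed.
Lemma dpl_rm2 (h : R -> R) c x l : derivable_pt_lim h x l ->
  derivable_pt_lim (fun s => c - 2 * h s) x (-2 * l).
Proof. intros H. eapply dpl_eq. apply dpl_minus; [apply dpl_const|]; apply dpl_mult; [apply dpl_const| exact H]. cbv beta. ring. Qed.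

Lemma rho3_R3 y z : 0 < fst z -> derivable_pt_lim (fun t => rho3 y (Cadd z (t,0))) 0 (rho3x y z).
Proof.
  destruct z as [x v]; simpl; intros Hx. unfold rho3x, kx; simpl.
  apply (ext_pair (fun z => rho3 y z)). unfold rho3. simpl. apply dpl_rm2.
  apply (DUIx k k1 y0 Hkd P0 Px Pxx (fun t s => snd (K t (s, v))) y x v (2 / (x / 2 * (x / 2)))); auto.
  - intros s u Hs; apply d_x0; auto.
  - intros s u Hs; apply d_xx; auto.
  - intros s u Hs; apply b_xx; lra.
  - intros w; exists (Pxu x w); apply d_xu; auto.
  - intros s Hs t _. apply Rabs_def2 in Hs. apply K_der; lra.
  - intros s Hs. apply Rabs_def2 in Hs. rewrite HK0 by (apply Re_pos; lra). auto.
Qed.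

Lemma rho3_R4 y z : 0 < fst z -> derivable_pt_lim (fun t => rho3 y (Cadd z (0,t))) 0 (rho3v y z).
Proof.
  destruct z as [x v]; simpl; intros Hx. unfold rho3v, kv; simpl.
  apply (ext_pairI (fun z => rho3 y z)). unfold rho3. simpl. apply dpl_rm2.
  apply (DUIv k k1 y0 Hkd P0 Pu Puu (fun t s => snd (K t (x, s))) y x v (2 / (x * x))); auto.
  - intros u; apply d_u0; auto.
  - intros u; apply d_uu; auto.
  - intros u; apply b_uu; lra.
  - intros s Hs t _. apply K_der; lra.
  - intros s Hs. rewrite HK0 by (apply Re_pos; lra). auto.
Qed.

Lemma rho3_R5 y z : 0 < fst z -> derivable_pt_lim (fun t => rho3y y (Cadd z (t,0))) 0 (rho3yx y z).
Proof.
  destruct z as [x v]; simpl; intros Hx. unfold rho3yx; simpl.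
  apply (ext_pair (fun z => rho3y y z)). unfold rho3y. simpl. apply dpl_rm2.
  apply (d_x0 x (v - 2 * k y)); auto.
Qed.

Lemma rho3_R6 y z : 0 < fst z -> derivable_pt_lim (fun t => rho3y y (Cadd z (0,t))) 0 (rho3yv y z).
Proof.
  destruct z as [x v]; simpl; intros Hx. unfold rho3yv; simpl.
  apply (ext_pairI (fun z => rho3y y z)). unfold rho3y. simpl. apply dpl_rm2.
  apply (dshift (fun u => P0 x u) (fun u => Pu x u) (2 * k y) v). apply d_u0; auto.
Qed.

Lemma PrimF_ok (A : R -> R -> R) x v Y :
  (forall w, exists l, derivable_pt_lim (fun u => A x u) w l) ->
  PrimF y0 (fun t => A x (v - 2 * k t)) Y y0 = 0 /\
  forall t, Rmin y0 Y <= t <= Rmax y0 Y ->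
    derivable_pt_lim (PrimF y0 (fun t => A x (v - 2 * k t)) Y) t (A x (v - 2 * k t)).
Proof. intros H. apply (PrimF_k k k1 y0 Hkd (fun u => A x u)); auto. Qed.

Lemma rho3_R7a y z : 0 < fst z -> derivable_pt_lim (fun t => rho3x y (Cadd z (t,0))) 0 (rho3xx y z).
Proof.
  destruct z as [x v]; simpl; intros Hx. unfold rho3xx, kxx; simpl.
  apply (ext_pair (fun z => rho3x y z)). unfold rho3x, kx. simpl. apply dpl_m2.
  apply (DUIx k k1 y0 Hkd Px Pxx Pxxx (fun t s => PrimF y0 (fun t => Px s (v - 2 * k t)) y t) y x v (12 / (x / 2 * (x / 2) * (x / 2)))); auto.
  - intros s u Hs; apply d_xx; auto.
  - intros s u Hs; apply d_xxx; auto.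
  - intros s u Hs; apply b_xxx; lra.
  - intros w; exists (Pxxu x w); apply d_xxu'; auto.
  - intros s Hs t Ht. apply Rabs_def2 in Hs. apply (PrimF_ok Px s v y); auto.
    intros w; exists (Pxu s w); apply d_xu; lra.
  - intros s Hs. apply Rabs_def2 in Hs. apply (PrimF_ok Px s v y).
    intros w; exists (Pxu s w); apply d_xu; lra.
Qed.

Lemma rho3_R7b y z : 0 < fst z -> derivable_pt_lim (fun t => rho3x y (Cadd z (0,t))) 0 (rho3xv y z).
Proof.
  destruct z as [x v]; simpl; intros Hx. unfold rho3xv, kxv; simpl.
  apply (ext_pairI (fun z => rho3x y z)). unfold rho3x, kx. simpl. apply dpl_m2.
  apply (DUIv k k1 y0 Hkd Px Pxu Pxuu (fun t s => PrimF y0 (fun t => Px x (s - 2 * k t)) y t) y x v (12 / (x * x * x))); auto.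
  - intros u; apply d_xu; auto.
  - intros u; apply d_xuu; auto.
  - intros u; apply b_xuu; lra.
  - intros s Hs t Ht. apply (PrimF_ok Px x s y); auto.
    intros w; exists (Pxu x w); apply d_xu; lra.
  - intros s Hs. apply (PrimF_ok Px x s y).
    intros w; exists (Pxu x w); apply d_xu; lra.
Qed.

Lemma rho3_R7c y z : 0 < fst z -> derivable_pt_lim (fun t => rho3v y (Cadd z (t,0))) 0 (rho3xv y z).
Proof.
  destruct z as [x v]; simpl; intros Hx. unfold rho3xv, kxv; simpl.
  apply (ext_pair (fun z => rho3v y z)). unfold rho3v, kv. simpl. apply dpl_m2.
  apply (DUIx k k1 y0 Hkd Pu Pxu Pxxu (fun t s => PrimF y0 (fun t => Pu s (v - 2 * k t)) y t) y x v (12 / (x / 2 * (x / 2) * (x / 2)))); auto.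
  - intros s u Hs; apply d_ux; auto.
  - intros s u Hs; apply d_xxu; auto.
  - intros s u Hs; apply b_xxu; lra.
  - intros w; exists (Pxuu x w); apply d_xuu; auto.
  - intros s Hs t Ht. apply Rabs_def2 in Hs. apply (PrimF_ok Pu s v y); auto.
    intros w; exists (Puu s w); apply d_uu; lra.
  - intros s Hs. apply Rabs_def2 in Hs. apply (PrimF_ok Pu s v y).
    intros w; exists (Puu s w); apply d_uu; lra.
Qed.

Lemma rho3_R7d y z : 0 < fst z -> derivable_pt_lim (fun t => rho3v y (Cadd z (0,t))) 0 (rho3vv y z).
Proof.
  destruct z as [x v]; simpl; intros Hx. unfold rho3vv, kvv; simpl.
  apply (ext_pairI (fun z => rho3v y z)). unfold rho3v, kv. simpl. apply dpl_m2.
  apply (DUIv k k1 y0 Hkd Pu Puu Puuu (fun t s => PrimF y0 (fun t => Pu x (s - 2 * k t)) y t) y x v (12 / (x * x * x))); auto.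
  - intros u; apply d_uu; auto.
  - intros u; apply d_uuu; auto.
  - intros u; apply b_uuu; lra.
  - intros s Hs t Ht. apply (PrimF_ok Pu x s y); auto.
    intros w; exists (Puu x w); apply d_uu; lra.
  - intros s Hs. apply (PrimF_ok Pu x s y).
    intros w; exists (Puu x w); apply d_uu; lra.
Qed.

Lemma rho3_R8 y z : 0 < fst z -> rho3xx y z + rho3vv y z = 0 /\ rho3xv y z = rho3xv y z.
Proof.
  destruct z as [x v]; simpl; intros Hx. split; auto. unfold rho3xx, rho3vv, kxx, kvv; simpl.
  destruct (PrimF_ok Pxx x v y) as [A0 A1]. { intros w; exists (Pxxu x w); apply d_xxu'; auto. }
  destruct (PrimF_ok Puu x v y) as [B0 B1]. { intros w; exists (Puuu x w); apply d_uuu; auto. }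
  destruct (MVT_abs (fun t => PrimF y0 (fun t => Pxx x (v - 2 * k t)) y t + PrimF y0 (fun t => Puu x (v - 2 * k t)) y t)
     (fun _ => 0) y0 y) as [c [Ec Hc]].
  { intros c Hc. eapply dpl_eq. apply dpl_plus; [apply A1; auto| apply B1; auto].
    apply harm; auto. }
  rewrite A0, B0, Rabs_R0, Rmult_0_l in Ec. rewrite Rplus_0_r, Rminus_0_r in Ec.
  apply Rabs_0_eq in Ec. lra.
Qed.

Lemma rho3_R9 y z : 0 < fst z ->
  rho3yv y z * rho3yv y z + rho3yx y z * rho3yx y z = 4 * rho3yv y z / fst z.
Proof. destruct z as [x v]; simpl; intros Hx. unfold rho3yv, rho3yx, Pu, Px, DD; simpl.
  field. split; [|lra]. apply Rgt_not_eq. pose proof (Rle_0_sqr (v - 2 * k y)); pose proof (Rmult_lt_0_compat x x Hx Hx); unfold Rsqr in *; lra. Qed.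

End Rho3.

Lemma psi2_alg B a y w : Cadd (Cadd B (RtoC a)) (Cmul (Cmul (Cmul (RtoC 2) Ci) (RtoC y)) (0, w)) =
  Cadd B (RtoC (a - 2 * y * w)).
Proof. destruct B; unfold Cadd, Cmul, RtoC, Ci; simpl; f_equal; ring. Qed.

Lemma psi3_alg B a w : fst w = 0 -> Cadd (Cadd B (RtoC a)) (Cmul (Cmul (RtoC 2) Ci) w) =
  Cadd B (RtoC (a - 2 * snd w)).
Proof. destruct B, w; simpl; intros ->; unfold Cadd, Cmul, RtoC, Ci; simpl; f_equal; ring. Qed.

Theorem mainTheorem2
  (U : Cx -> Cx -> Prop)            (* the open set of (q, z) *)
  (b b' : Cx -> Cx)                  (* holomorphic b, with complex derivative b' *)
  (L : Cx -> Cx -> Cx)                (* the chosen branch of ln (q + b(z)) *)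
  (G : Cx -> R) (r k : R -> R) (y0 : R) (K : R -> Cx -> Cx)
  (HU : Open2 U)
  (Hz : forall q z, U q z -> 0 < Re (Cadd z (Cconj z)))
  (Hb : forall q z, U q z -> CDeriv b z (b' z))
  (Hb' : forall q z, U q z -> exists l, CDeriv b' z l)
  (HLexp : forall q z, U q z -> Cexp (L q z) = Cadd q (b z))
  (HLcont : ContinuousOn2 U L)
  (HG : forall q z, U q z ->
      PartDiff (fun w => RtoC (G w)) z /\
      PartDiff (Wd (fun w => RtoC (G w))) z /\
      Wdb (Wd (fun w => RtoC (G w))) z =
        Cdiv (Cadd (b z) (Cconj (b z)))
             (Cmul (Cadd z (Cconj z)) (Cadd z (Cconj z))))
  (Hr : Smooth r) (Hk : Smooth k)
  (HK0 : forall z, 0 < Re (Cadd z (Cconj z)) -> K y0 z = (0, 0))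
  (HK : forall z, 0 < Re (Cadd z (Cconj z)) -> forall y,
      let integrand :=
        Cln (Cdiv (Cadd (Cconj z) (Cmul (RtoC 2) (Cmul Ci (RtoC (k y)))))
                  (Csub z (Cmul (RtoC 2) (Cmul Ci (RtoC (k y)))))) in
      derivable_pt_lim (fun t => fst (K t z)) y (fst integrand) /\
      derivable_pt_lim (fun t => snd (K t z)) y (snd integrand)) :
  let psi1 := fun q z =>
    (((q + b z) * L q z) + ((Cconj q + Cconj (b z)) * Cconj (L q z))
     - ((q + Cconj q) * (Cln (z + Cconj z) + RtoC 1))
     + RtoC (G z) + RtoC (r (yof q)))%C in
  let psi2 := fun q z =>
    (psi1 q z + RtoC 2 * Ci * RtoC (yof q) * Cln (Cconj z / z))%C in
  let psi3 := fun q z =>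
    (psi1 q z + RtoC 2 * Ci * K (yof q) z)%C in
  IsSolution U psi1 /\ IsSolution U psi2 /\ IsSolution U psi3.
Proof.
  cbv zeta.
  destruct Hr as [fs [Hfs0 Hfs]].
  assert (Hr1 : forall y, derivable_pt_lim r y (fs 1%nat y)) by (intro; rewrite <- Hfs0; apply Hfs).
  assert (Hr2 : forall y, derivable_pt_lim (fs 1%nat) y (fs 2%nat y)) by (intro; apply Hfs).
  split; [|split].
  - apply (master U b b' L G HU Hz Hb Hb' HLexp HLcont HG (fun y _ => r y) (fun y _ => fs 1%nat y)
      (fun y _ => fs 2%nat y) (fun _ _ => 0) (fun _ _ => 0) (fun _ _ => 0) (fun _ _ => 0)
      (fun _ _ => 0) (fun _ _ => 0) (fun _ _ => 0) (fun _ _ => 0)).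
    + intros y z _; apply Hr1.
    + intros y z _; apply Hr2.
    + intros y z _; apply dpl_const.
    + intros y z _; apply dpl_const.
    + intros y z _; apply dpl_const.
    + intros y z _; apply dpl_const.
    + intros y z _; apply dpl_const.
    + intros y z _; apply dpl_const.
    + intros y z _; apply dpl_const.
    + intros y z _; apply dpl_const.
    + intros y z _; split; ring.
    + intros y z Hx; field; lra.
    + intros q z _; reflexivity.
  - apply (master U b b' L G HU Hz Hb Hb' HLexp HLcont HG (rho2 r) (rho2y (fs 1%nat))
      (rho2yy (fs 2%nat)) rho2x rho2v rho2yx rho2yv rho2xx rho2xv rho2xv rho2vv).
    + apply rho2_R1; auto.
    + apply rho2_R2; auto.
    + apply rho2_R3.
    + apply rho2_R4.
    + apply rho2_R5.
    + apply rho2_R6.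
    + apply rho2_R7a.
    + apply rho2_R7b.
    + apply rho2_R7c.
    + apply rho2_R7d.
    + apply rho2_R8.
    + apply rho2_R9.
    + intros q [x v] Hx. simpl in Hx. rewrite yof_eq.
      change (Cconj (x, v)) with (x, - v). rewrite Cln_ratio by auto. rewrite psi2_alg.
      unfold rho2; simpl. f_equal; f_equal; ring.
  - destruct Hk as [ks [Hks0 Hks]].
    assert (Hkd : forall t, derivable_pt_lim k t (ks 1%nat t)) by (intro; rewrite <- Hks0; apply Hks).
    apply (master U b b' L G HU Hz Hb Hb' HLexp HLcont HG (rho3 r K) (rho3y (fs 1%nat) k)
      (rho3yy (fs 2%nat) k (ks 1%nat)) (rho3x k y0) (rho3v k y0) (rho3yx k) (rho3yv k)
      (rho3xx k y0) (rho3xv k y0) (rho3xv k y0) (rho3vv k y0)).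
    + intros; eapply rho3_R1; eauto.
    + intros; eapply rho3_R2; eauto.
    + intros; eapply rho3_R3; eauto.
    + intros; eapply rho3_R4; eauto.
    + intros; eapply rho3_R5; eauto.
    + intros; eapply rho3_R6; eauto.
    + intros; eapply rho3_R7a; eauto.
    + intros; eapply rho3_R7b; eauto.
    + intros; eapply rho3_R7c; eauto.
    + intros; eapply rho3_R7d; eauto.
    + intros; eapply rho3_R8; eauto.
    + intros; eapply rho3_R9; eauto.
    + intros q [x v] Hx. simpl in Hx. rewrite psi3_alg.
      * unfold rho3; reflexivity.
      * eapply K_fst; eauto.
Qed.
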